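(* Let $T,R,\epsilon,\lambda>0$ and let $U=(\phi,A)$ with $A=A_0dy^0+A_1dy^1+A_2dy^2$ be a smooth configuration on $[0,T]\times\overline{B_\nu(R)}$, $B_\nu(R)\subset\mathbb R^2$. For $s\in[0,T]$ write $U(s)$ for the 2d configuration $(\phi(s,\cdot),A_1(s,\cdot)dy^1+A_2(s,\cdot)dy^2)$. Then for all $r\in(0,R)$ and $t\in(0,T)$, $$\Big|\int_{B_\nu(r)}\omega(U(t))-\int_{B_\nu(r)}\omega(U(0))\Big|\le\max\{1,\lambda^{-1}\}\int_{(0,t)\times\partial B_\nu(r)}e^{3d}_{\epsilon,\lambda}(U)\,d\mathcal H^2,$$ where $e^{3d}_{\epsilon,\lambda}(U)=\frac12\sum_{a=0}^2|D_a\phi|^2+\frac{\epsilon^2}2\sum_{0\le a<b\le2}F_{ab}^2+\frac{\lambda}{8\epsilon^2}(|\phi|^2-1)^2$.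
   Context: Points of $(0,T)\times B_\nu(R)$ are written $(y^0,y^\nu)$, $y^\nu=(y^1,y^2)$, $B_\nu(r)=\{|y^\nu|<r\}$. $D_a\phi=\partial_a\phi-iA_a\phi$, $F_{ab}=\partial_aA_b-\partial_bA_a$, $\langle f,g\rangle=\mathrm{Re}(f\bar g)$. For a 2d configuration $V=(\phi,A_1dy^1+A_2dy^2)$: $j(V)=(\langle i\phi,D_1\phi\rangle,\langle i\phi,D_2\phi\rangle)$, $\omega(V)=\frac12(\partial_1j_2-\partial_2j_1+F_{12})$. $\mathcal H^2$ is two-dimensional Hausdorff measure. *)

(* Defs.v *)
From Stdlib Require Import Reals Lra List ClassicalEpsilon.
Open Scope R_scope.

(* Real-valued functions of (y0, y1, y2) = (s, x, y). *)
Definition F3 := R -> R -> R -> R.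

Definition has_partial (i : nat) (f : F3) (s x y l : R) : Prop :=
  match i with
  | O => derivable_pt_lim (fun u => f u x y) s l
  | S O => derivable_pt_lim (fun u => f s u y) x l
  | _ => derivable_pt_lim (fun u => f s x u) y l
  end.

(* The partial derivative (its value when it exists; unspecified otherwise). *)
Definition Dpart (i : nat) (f : F3) : F3 :=
  fun s x y => epsilon (inhabits 0) (fun l => has_partial i f s x y l).

Fixpoint pdl (l : list nat) (f : F3) : F3 :=
  match l with
  | nil => f
  | i :: l' => Dpart i (pdl l' f)
  end.

Definition continuous3_at (f : F3) (s x y : R) : Prop :=
  forall e, 0 < e -> exists d, 0 < d /\
    forall s' x' y', Rabs (s' - s) < d -> Rabs (x' - x) < d -> Rabs (y' - y) < d ->
      Rabs (f s' x' y' - f s x y) < e.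

Definition open3 (O : R -> R -> R -> Prop) : Prop :=
  forall s x y, O s x y -> exists d, 0 < d /\
    forall s' x' y', Rabs (s' - s) < d -> Rabs (x' - x) < d -> Rabs (y' - y) < d ->
      O s' x' y'.

Definition smooth_on (O : R -> R -> R -> Prop) (f : F3) : Prop :=
  forall (l : list nat) s x y, O s x y ->
    continuous3_at (pdl l f) s x y /\
    forall i, (i <= 2)%nat -> exists v, has_partial i (pdl l f) s x y v.

(* The Riemann integral on [a,b] (value when integrable; unspecified otherwise). *)
Definition Rint (f : R -> R) (a b : R) : R :=
  epsilon (inhabits 0) (fun v => exists pr : Riemann_integrable f a b, RiemannInt pr = v).

(* Integral over the disk B(r) in the (y1,y2)-plane, as an iterated integral. *)
Definition disk_int (g : R -> R -> R) (r : R) : R :=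
  Rint (fun x => Rint (fun y => g x y) (- sqrt (r ^ 2 - x ^ 2)) (sqrt (r ^ 2 - x ^ 2))) (- r) r.

(* Integral over the cylinder (0,t) x dB(r) w.r.t. 2-dim Hausdorff measure
   (surface element  r dtheta ds). *)
Definition cyl_int (h : F3) (t r : R) : R :=
  Rint (fun s => Rint (fun th => h s (r * cos th) (r * sin th) * r) 0 (2 * PI)) 0 t.

(* A configuration: phi = p + i q, A = A0 dy0 + A1 dy1 + A2 dy2. *)
Definition Aof (A0 A1 A2 : F3) (a : nat) : F3 :=
  match a with O => A0 | S O => A1 | _ => A2 end.

(* D_a phi = d_a phi - i A_a phi: real and imaginary parts. *)
Definition Dre (p q : F3) (Aa : F3) (a : nat) : F3 :=
  fun s x y => Dpart a p s x y + Aa s x y * q s x y.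
Definition Dim (p q : F3) (Aa : F3) (a : nat) : F3 :=
  fun s x y => Dpart a q s x y - Aa s x y * p s x y.

Definition Dsq (p q Aa : F3) (a : nat) : F3 :=
  fun s x y => (Dre p q Aa a s x y) ^ 2 + (Dim p q Aa a s x y) ^ 2.

Definition Fab (A0 A1 A2 : F3) (a b : nat) : F3 :=
  fun s x y => Dpart a (Aof A0 A1 A2 b) s x y - Dpart b (Aof A0 A1 A2 a) s x y.

(* j_k = < i phi, D_k phi > = Re (i phi * conj (D_k phi)), k = 1,2 *)
Definition jcur (p q Ak : F3) (k : nat) : F3 :=
  fun s x y => (- q s x y) * Dre p q Ak k s x y + p s x y * Dim p q Ak k s x y.

Definition omega (p q A1 A2 : F3) : F3 :=
  fun s x y => / 2 * (Dpart 1 (jcur p q A2 2) s x y - Dpart 2 (jcur p q A1 1) s x y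
                      + (Dpart 1 A2 s x y - Dpart 2 A1 s x y)).

Definition e3d (eps lam : R) (p q A0 A1 A2 : F3) : F3 :=
  fun s x y =>
    / 2 * (Dsq p q A0 0 s x y + Dsq p q A1 1 s x y + Dsq p q A2 2 s x y)
    + eps ^ 2 / 2 * ((Fab A0 A1 A2 0 1 s x y) ^ 2 + (Fab A0 A1 A2 0 2 s x y) ^ 2
                     + (Fab A0 A1 A2 1 2 s x y) ^ 2)
    + lam / (8 * eps ^ 2) * ((p s x y) ^ 2 + (q s x y) ^ 2 - 1) ^ 2.

(* Main.v *)
Require Import Defs.
From Stdlib Require Import Reals Lra Lia List ClassicalEpsilon FunctionalExtensionality.
From Coquelicot Require Import Coquelicot.
Open Scope R_scope.

Lemma Rint_RInt f a b : ex_RInt f a b -> Rint f a b = RInt f a b.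
Proof.
  intros H. unfold Rint.
  pose proof (ex_RInt_Reals_0 _ _ _ H) as pr.
  assert (E : exists v, exists pr : Riemann_integrable f a b, RiemannInt pr = v)
    by (exists (RiemannInt pr); exists pr; reflexivity).
  destruct (epsilon_spec (inhabits 0) _ E) as [pr' Hpr'].
  rewrite <- Hpr'. symmetry. apply RInt_Reals.
Qed.

Lemma Dpart_eq i f s x y l : has_partial i f s x y l -> Dpart i f s x y = l.
Proof.
  intros H. unfold Dpart.
  assert (E : exists l, has_partial i f s x y l) by (exists l; exact H).
  pose proof (epsilon_spec (inhabits 0) _ E) as H'.
  destruct i as [|[|i]]; simpl in *; eapply uniqueness_limite; eauto.
Qed.

Lemma pdl_app l1 l2 f : pdl (l1 ++ l2) f = pdl l1 (pdl l2 f).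
Proof. induction l1; simpl; [reflexivity| now rewrite IHl1]. Qed.

Lemma smooth_Dpart O f i : smooth_on O f -> smooth_on O (Dpart i f).
Proof.
  intros H l s x y Hs. specialize (H (l ++ i :: nil) s x y Hs).
  rewrite pdl_app in H. exact H.
Qed.

Lemma smooth_cont O f s x y : smooth_on O f -> O s x y -> continuous3_at f s x y.
Proof. intros H Hs. exact (proj1 (H nil s x y Hs)). Qed.

Lemma smooth_hp O f i s x y : smooth_on O f -> O s x y -> (i <= 2)%nat ->
  has_partial i f s x y (Dpart i f s x y).
Proof.
  intros H Hs Hi. destruct (proj2 (H nil s x y Hs) i Hi) as [v Hv].
  simpl in Hv. rewrite (Dpart_eq _ _ _ _ _ _ Hv). exact Hv.
Qed.

Lemma hp_plus i F G s x y l1 l2 : has_partial i F s x y l1 -> has_partial i G s x y l2 ->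
  has_partial i (fun s x y => F s x y + G s x y) s x y (l1 + l2).
Proof. destruct i as [|[|i]]; simpl; intros; now apply derivable_pt_lim_plus. Qed.
Lemma hp_minus i F G s x y l1 l2 : has_partial i F s x y l1 -> has_partial i G s x y l2 ->
  has_partial i (fun s x y => F s x y - G s x y) s x y (l1 - l2).
Proof. destruct i as [|[|i]]; simpl; intros; now apply derivable_pt_lim_minus. Qed.
Lemma hp_mult i F G s x y l1 l2 : has_partial i F s x y l1 -> has_partial i G s x y l2 ->
  has_partial i (fun s x y => F s x y * G s x y) s x y (l1 * G s x y + F s x y * l2).
Proof. destruct i as [|[|i]]; simpl; intros H1 H2.
  - exact (derivable_pt_lim_mult (fun u => F u x y) (fun u => G u x y) s l1 l2 H1 H2).
  - exact (derivable_pt_lim_mult (fun u => F s u y) (fun u => G s u y) x l1 l2 H1 H2).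
  - exact (derivable_pt_lim_mult (fun u => F s x u) (fun u => G s x u) y l1 l2 H1 H2).
Qed.
Lemma hp_opp i F s x y l1 : has_partial i F s x y l1 ->
  has_partial i (fun s x y => - F s x y) s x y (- l1).
Proof. destruct i as [|[|i]]; simpl; intros; now apply derivable_pt_lim_opp. Qed.
Lemma hp_ext i F G s x y l : (forall s x y, F s x y = G s x y) -> has_partial i F s x y l -> has_partial i G s x y l.
Proof. intros E. assert (F = G) by (do 3 (apply functional_extensionality; intro); apply E). now subst. Qed.
Lemma hp_val i F s x y l l' : l = l' -> has_partial i F s x y l -> has_partial i F s x y l'.
Proof. intros; now subst. Qed.

Ltac rring := match goal with |- @eq _ ?a ?b => change (@eq R a b); ring end.

Lemma c2_comp (F : R -> R -> R) (f g : R -> R) x :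
  continuity_2d_pt F (f x) (g x) -> continuous f x -> continuous g x ->
  continuous (fun t => F (f t) (g t)) x.
Proof.
  intros HF Hf Hg.
  apply (continuous_comp_2 f g F x Hf Hg).
  apply continuity_2d_pt_filterlim in HF. exact HF.
Qed.

Lemma cont_const (c x : R) : continuous (fun _ : R => c) x.
Proof. apply continuous_const. Qed.
Lemma cont_id (x : R) : continuous (fun t : R => t) x.
Proof. apply continuous_id. Qed.

Lemma ex_RInt_seg (g : R -> R -> R) x a b :
  (forall u, Rmin a b <= u <= Rmax a b -> continuity_2d_pt g x u) -> ex_RInt (g x) a b.
Proof.
  intros H. apply (ex_RInt_continuous (V:=R_CompleteNormedModule)). intros z Hz.
  apply (c2_comp g (fun _ => x) (fun t => t) z); [now apply H | apply cont_const | apply cont_id].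
Qed.

Lemma RInt_abs_bound f a b M : ex_RInt f a b ->
  (forall t, Rmin a b <= t <= Rmax a b -> Rabs (f t) <= M) -> Rabs (RInt f a b) <= Rabs (b - a) * M.
Proof.
  intros Hex H. destruct (Rle_dec a b) as [Hab|Hab].
  - rewrite (Rabs_right (b - a)) by lra. apply abs_RInt_le_const; auto.
    intros t Ht. apply H. rewrite Rmin_left, Rmax_right; lra.
  - rewrite <- (opp_RInt_swap f b a (ex_RInt_swap _ _ _ Hex)). unfold opp; simpl.
    rewrite Rabs_Ropp, (Rabs_left (b - a)) by lra.
    replace (- (b - a)) with (a - b) by ring.
    apply abs_RInt_le_const; [lra| now apply ex_RInt_swap |].
    intros t Ht. apply H. rewrite Rmin_right, Rmax_left; lra.
Qed.

Definition Psi (g : R -> R -> R) x y := RInt (fun u => g x u) 0 y.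

Lemma small_box x0 y0 Rad : x0 ^ 2 + y0 ^ 2 < Rad ^ 2 ->
  exists d, 0 < d <= 1 /\ forall x y, Rabs x <= Rabs x0 + d -> Rabs y <= Rabs y0 + d -> x ^ 2 + y ^ 2 < Rad ^ 2.
Proof.
  intros H. set (gap := Rad ^ 2 - (x0 ^ 2 + y0 ^ 2)).
  set (K := 2 * Rabs x0 + 2 * Rabs y0 + 3).
  assert (HK : 0 < K) by (unfold K; pose proof (Rabs_pos x0); pose proof (Rabs_pos y0); lra).
  exists (Rmin 1 (gap / (2 * K))). split.
  - split; [apply Rmin_glb_lt; [lra| unfold gap; apply Rdiv_lt_0_compat; lra] | apply Rmin_l].
  - intros x y Hx Hy. set (d := Rmin 1 (gap / (2 * K))) in *.
    assert (Hd1 : d <= 1) by apply Rmin_l.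
    assert (Hd2 : d <= gap / (2 * K)) by apply Rmin_r.
    assert (Hd0 : 0 < d) by (apply Rmin_glb_lt; [lra| unfold gap; apply Rdiv_lt_0_compat; lra]).
    assert (Hx2 : x ^ 2 <= (Rabs x0 + d) ^ 2).
    { rewrite <- (pow2_abs x). apply pow_incr. split; [apply Rabs_pos| exact Hx]. }
    assert (Hy2 : y ^ 2 <= (Rabs y0 + d) ^ 2).
    { rewrite <- (pow2_abs y). apply pow_incr. split; [apply Rabs_pos| exact Hy]. }
    assert (HdK : d * K <= gap / 2).
    { apply Rmult_le_compat_r with (r := K) in Hd2; [|lra].
      replace (gap / (2 * K) * K) with (gap / 2) in Hd2 by (field; lra). exact Hd2. }
    unfold K in HdK. pose proof (Rabs_pos x0). pose proof (Rabs_pos y0).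
    pose proof (pow2_abs x0) as E0. pose proof (pow2_abs y0) as E1.
    assert (gap > 0) by (unfold gap; lra).
    unfold gap in *.
    assert ((Rabs x0 + d) ^ 2 + (Rabs y0 + d) ^ 2 <= x0 ^ 2 + y0 ^ 2 + d * (2 * Rabs x0 + 2 * Rabs y0 + 3)).
    { rewrite <- E0, <- E1. nra. }
    lra.
Qed.

Lemma locally_R (x : R) (P : R -> Prop) :
  (exists d : posreal, forall y, Rabs (y - x) < d -> P y) -> locally x P.
Proof. intros [d Hd]. exists d. intros y Hy. apply Hd. exact Hy. Qed.

Lemma locally_R_inv (x : R) (P : R -> Prop) :
  locally x P -> exists d : posreal, forall y, Rabs (y - x) < d -> P y.
Proof. intros [d Hd]. exists d. intros y Hy. apply Hd. exact Hy. Qed.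

Lemma cont_eps (f : R -> R) x : continuous f x ->
  forall eps : posreal, exists d : posreal, forall y, Rabs (y - x) < d -> Rabs (f y - f x) < eps.
Proof.
  intros H eps. apply filterlim_locally with (eps := eps) in H.
  apply locally_R_inv in H. destruct H as [d Hd]. exists d. intros y Hy. apply (Hd y Hy).
Qed.

Lemma eps_cont (f : R -> R) x :
  (forall eps : posreal, exists d : posreal, forall y, Rabs (y - x) < d -> Rabs (f y - f x) < eps) ->
  continuous f x.
Proof.
  intros H. apply filterlim_locally. intros eps. apply locally_R.
  destruct (H eps) as [d Hd]. exists d. intros y Hy. apply (Hd y Hy).
Qed.

Lemma abs_le_shift x x0 d : Rabs (x - x0) <= d -> Rabs x <= Rabs x0 + d.
Proof.
  intros H. replace x with (x0 + (x - x0)) by ring.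
  eapply Rle_trans; [apply Rabs_triang| lra].
Qed.

Lemma RInt_minusR (f g : R -> R) a b : ex_RInt f a b -> ex_RInt g a b ->
  RInt (fun x => f x - g x) a b = RInt f a b - RInt g a b.
Proof. intros H1 H2. exact (RInt_minus (V := R_CompleteNormedModule) f g a b H1 H2). Qed.
Lemma RInt_plusR (f g : R -> R) a b : ex_RInt f a b -> ex_RInt g a b ->
  RInt (fun x => f x + g x) a b = RInt f a b + RInt g a b.
Proof. intros H1 H2. exact (RInt_plus (V := R_CompleteNormedModule) f g a b H1 H2). Qed.
Lemma RInt_scalR (f : R -> R) a b c : ex_RInt f a b ->
  RInt (fun x => c * f x) a b = c * RInt f a b.
Proof. intros H1. exact (RInt_scal (V := R_CompleteNormedModule) f a b c H1). Qed.
Lemma ex_RInt_minusR (f g : R -> R) a b : ex_RInt f a b -> ex_RInt g a b ->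
  ex_RInt (fun x => f x - g x) a b.
Proof. intros H1 H2. exact (ex_RInt_minus (V := R_CompleteNormedModule) f g a b H1 H2). Qed.
Lemma ex_RInt_plusR (f g : R -> R) a b : ex_RInt f a b -> ex_RInt g a b ->
  ex_RInt (fun x => f x + g x) a b.
Proof. intros H1 H2. exact (ex_RInt_plus (V := R_CompleteNormedModule) f g a b H1 H2). Qed.
Lemma ex_RInt_scalR (f : R -> R) a b c : ex_RInt f a b -> ex_RInt (fun x => c * f x) a b.
Proof. intros H1. exact (ex_RInt_scal (V := R_CompleteNormedModule) f a b c H1). Qed.
Lemma RInt_swapR (f : R -> R) a b : ex_RInt f a b -> RInt f b a = - RInt f a b.
Proof. intros H. rewrite <- (opp_RInt_swap (V := R_CompleteNormedModule) f a b H). reflexivity. Qed.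
Lemma RInt_ChaslesR (f : R -> R) a b c : ex_RInt f a b -> ex_RInt f b c ->
  @eq R (RInt f a b + RInt f b c) (RInt f a c).
Proof. intros H1 H2. exact (RInt_Chasles (V := R_CompleteNormedModule) f a b c H1 H2). Qed.

Lemma abs_bnd x M : Rabs x <= M -> - M <= x <= M.
Proof. unfold Rabs; destruct (Rcase_abs x); lra. Qed.

Lemma psi_cont g Rad x0 y0 : x0 ^ 2 + y0 ^ 2 < Rad ^ 2 ->
  (forall x y, x ^ 2 + y ^ 2 < Rad ^ 2 -> continuity_2d_pt g x y) ->
  continuity_2d_pt (Psi g) x0 y0.
Proof.
  intros H0 Hc.
  destruct (small_box x0 y0 Rad H0) as [d0 [Hd0 Hbox]].
  set (M := Rabs y0 + d0).
  assert (HM : 0 < M) by (unfold M; pose proof (Rabs_pos y0); lra).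
  assert (Hg : forall x u, Rabs (x - x0) <= d0 -> Rabs u <= M -> continuity_2d_pt g x u).
  { intros x u Hx Hu. apply Hc. apply Hbox; [now apply abs_le_shift | exact Hu]. }
  intros eps.
  assert (contB : continuous (fun y => Psi g x0 y) y0).
  { apply (continuous_RInt_1 (g x0) 0 y0 (fun z => RInt (g x0) 0 z)).
    apply locally_R. exists (mkposreal d0 (proj1 Hd0)). simpl. intros z Hz.
    apply (RInt_correct (V := R_CompleteNormedModule)). apply ex_RInt_seg.
    intros u Hu. apply Hg; [rewrite Rminus_eq_0, Rabs_R0; lra|].
    assert (Rabs z <= M) by (unfold M; apply abs_le_shift; lra).
    destruct Hu as [Hu1 Hu2]. unfold Rmin, Rmax in *.
    apply abs_bnd in H. apply Rabs_le. destruct (Rle_dec 0 z); lra. }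
  assert (Heps2 : 0 < eps / 2) by (destruct eps; simpl; lra).
  destruct (cont_eps _ _ contB (mkposreal _ Heps2)) as [d2 Hd2]. simpl in Hd2.
  assert (Heps1 : 0 < eps / (2 * (M + 1))) by (destruct eps; simpl; apply Rdiv_lt_0_compat; lra).
  destruct (uniform_continuity_2d_1d' g (- M) M x0) with (eps := mkposreal _ Heps1) as [d1 Hd1].
  { intros u Hu. apply Hg; [rewrite Rminus_eq_0, Rabs_R0; lra| apply Rabs_le; lra]. }
  simpl in Hd1.
  assert (Hd : 0 < Rmin d0 (Rmin d1 d2)).
  { destruct d1, d2; simpl. repeat apply Rmin_glb_lt; lra. }
  exists (mkposreal _ Hd). simpl. intros x y Hx Hy.
  assert (Hx0 : Rabs (x - x0) < d0) by (eapply Rlt_le_trans; [exact Hx| apply Rmin_l]).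
  assert (Hx1 : Rabs (x - x0) < d1) by (eapply Rlt_le_trans; [exact Hx| eapply Rle_trans; [apply Rmin_r| apply Rmin_l]]).
  assert (Hy0 : Rabs (y - y0) < d0) by (eapply Rlt_le_trans; [exact Hy| apply Rmin_l]).
  assert (Hy2 : Rabs (y - y0) < d2) by (eapply Rlt_le_trans; [exact Hy| eapply Rle_trans; [apply Rmin_r| apply Rmin_r]]).
  assert (HyM : Rabs y <= M) by (unfold M; apply abs_le_shift; lra).
  assert (Hbet : forall u, Rmin 0 y <= u <= Rmax 0 y -> Rabs u <= M).
  { intros u [Hu1 Hu2]. apply Rabs_le. apply abs_bnd in HyM.
    unfold Rmin, Rmax in *. destruct (Rle_dec 0 y); lra. }
  assert (E1 : ex_RInt (g x) 0 y) by (apply ex_RInt_seg; intros u Hu; apply Hg; [lra| now apply Hbet]).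
  assert (E2 : ex_RInt (g x0) 0 y) by (apply ex_RInt_seg; intros u Hu; apply Hg; [rewrite Rminus_eq_0, Rabs_R0; lra| now apply Hbet]).
  assert (A : Rabs (Psi g x y - Psi g x0 y) <= Rabs (y - 0) * (eps / (2 * (M + 1)))).
  { unfold Psi. change (Rabs (RInt (g x) 0 y - RInt (g x0) 0 y) <= Rabs (y - 0) * (eps / (2 * (M + 1)))).
    rewrite <- (RInt_minusR (g x) (g x0) 0 y E1 E2).
    apply RInt_abs_bound; [apply ex_RInt_minusR; assumption|].
    intros u Hu. apply Rlt_le. pose proof (cond_pos d1).
    pose proof (abs_bnd (x - x0) d1 (Rlt_le _ _ Hx1)).
    apply (Hd1 u x0 u x).
    - apply abs_bnd. now apply Hbet.
    - lra.
    - apply abs_bnd. now apply Hbet.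
    - lra.
    - rewrite Rminus_eq_0, Rabs_R0. destruct d1; simpl; lra. }
  assert (B : Rabs (Psi g x0 y - Psi g x0 y0) < eps / 2) by (apply Hd2; exact Hy2).
  replace (Psi g x y - Psi g x0 y0) with ((Psi g x y - Psi g x0 y) + (Psi g x0 y - Psi g x0 y0)) by ring.
  eapply Rle_lt_trans; [apply Rabs_triang|].
  assert (Rabs (y - 0) * (eps / (2 * (M + 1))) < eps / 2).
  { rewrite Rminus_0_r. 
    apply Rle_lt_trans with (M * (eps / (2 * (M + 1)))).
    - apply Rmult_le_compat_r; [lra| exact HyM].
    - apply Rmult_lt_reg_r with (2 * (M + 1)); [lra|].
      field_simplify; [|lra]. destruct eps; simpl in *. nra. }
  lra.
Qed.

Lemma cos_lip a b : Rabs (cos a - cos b) <= Rabs (a - b).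
Proof.
  destruct (MVT_abs cos (fun c => - sin c) b a) as [c [Hc _]].
  { intros c _. apply derivable_pt_lim_cos. }
  rewrite Hc. rewrite <- (Rmult_1_l (Rabs (a - b))) at 2.
  apply Rmult_le_compat_r; [apply Rabs_pos|]. rewrite Rabs_Ropp.
  apply Rabs_le. apply SIN_bound.
Qed.

Lemma sin_lip a b : Rabs (sin a - sin b) <= Rabs (a - b).
Proof.
  destruct (MVT_abs sin cos b a) as [c [Hc _]].
  { intros c _. apply derivable_pt_lim_sin. }
  rewrite Hc. rewrite <- (Rmult_1_l (Rabs (a - b))) at 2.
  apply Rmult_le_compat_r; [apply Rabs_pos|].
  apply Rabs_le. apply COS_bound.
Qed.

Lemma c2_comp1 (F : R -> R -> R) (f : R -> R) x y :
  continuity_2d_pt F (f x) y -> continuous f x -> continuity_2d_pt (fun a b => F (f a) b) x y.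
Proof.
  intros HF Hf eps. destruct (HF eps) as [d Hd].
  destruct (cont_eps f x Hf d) as [d' Hd'].
  assert (H0 : 0 < Rmin d d') by (destruct d, d'; simpl; apply Rmin_glb_lt; lra).
  exists (mkposreal _ H0). simpl. intros u v Hu Hv. apply Hd.
  - apply Hd'. eapply Rlt_le_trans; [exact Hu| apply Rmin_r].
  - eapply Rlt_le_trans; [exact Hv| apply Rmin_l].
Qed.

Lemma c2_of_1d (f : R -> R) x y : continuous f x -> continuity_2d_pt (fun a _ => f a) x y.
Proof.
  intros Hf eps. destruct (cont_eps f x Hf eps) as [d Hd].
  exists d. intros u v Hu Hv. apply Hd. exact Hu.
Qed.

Lemma cont_rcos r x : continuous (fun t => r * cos t) x.
Proof. apply (ex_derive_continuous (K:=R_AbsRing) (V:=R_NormedModule)). auto_derive. auto. Qed.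
Lemma cont_rsin r x : continuous (fun t => r * sin t) x.
Proof. apply (ex_derive_continuous (K:=R_AbsRing) (V:=R_NormedModule)). auto_derive. auto. Qed.

Lemma box_gen r Rad t1 y1 : 0 < r -> (r * cos t1) ^ 2 + y1 ^ 2 < Rad ^ 2 ->
  exists d, 0 < d /\ forall t u, Rabs (t - t1) < d -> Rabs u <= Rabs y1 + d ->
    (r * cos t) ^ 2 + u ^ 2 < Rad ^ 2.
Proof.
  intros Hr H. destruct (small_box _ _ _ H) as [d0 [Hd0 Hb]].
  exists (Rmin d0 (d0 / r)). split.
  - apply Rmin_glb_lt; [lra| apply Rdiv_lt_0_compat; lra].
  - intros t u Ht Hu. apply Hb.
    + apply abs_le_shift.
      replace (r * cos t - r * cos t1) with (r * (cos t - cos t1)) by ring.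
      rewrite Rabs_mult, (Rabs_right r) by lra.
      apply Rle_trans with (r * Rabs (t - t1)).
      * apply Rmult_le_compat_l; [lra| apply cos_lip].
      * apply Rle_trans with (r * (d0 / r)); [|right; field; lra].
        apply Rmult_le_compat_l; [lra|]. left. eapply Rlt_le_trans; [exact Ht| apply Rmin_r].
    + eapply Rle_trans; [exact Hu|]. pose proof (Rmin_l d0 (d0 / r)). lra.
Qed.

Definition GreenHyp (V1 V2 D1V2 D2V1 : R -> R -> R) Rad :=
  forall x y, x ^ 2 + y ^ 2 < Rad ^ 2 ->
    continuity_2d_pt V1 x y /\ continuity_2d_pt V2 x y /\ continuity_2d_pt D1V2 x y /\
    continuity_2d_pt D2V1 x y /\ derivable_pt_lim (fun u => V2 u y) x (D1V2 x y) /\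
    derivable_pt_lim (fun u => V1 x u) y (D2V1 x y).

Lemma sqrt_sq_le x r : 0 <= r -> - r <= x <= r -> x ^ 2 + (sqrt (r ^ 2 - x ^ 2)) ^ 2 = r ^ 2.
Proof.
  intros Hr Hx. rewrite <- Rsqr_pow2 with (x := sqrt _). rewrite Rsqr_sqrt; [ring|]. nra.
Qed.

Lemma circle_pt r t : (r * cos t) ^ 2 + (r * sin t) ^ 2 = r ^ 2.
Proof. pose proof (sin2_cos2 t). unfold Rsqr in *. nra. Qed.

Lemma sq_le_abs u h : Rabs u <= h -> u ^ 2 <= h ^ 2.
Proof. intros H. rewrite <- (pow2_abs u). apply pow_incr. split; [apply Rabs_pos| exact H]. Qed.

Lemma between_abs u a : Rmin (- a) a <= u <= Rmax (- a) a \/ Rmin 0 a <= u <= Rmax 0 a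
   \/ Rmin 0 (- a) <= u <= Rmax 0 (- a) -> 0 <= a -> Rabs u <= a.
Proof.
  intros H Ha. apply Rabs_le. unfold Rmin, Rmax in H.
  destruct (Rle_dec (- a) a), (Rle_dec 0 a), (Rle_dec 0 (- a)); lra.
Qed.

Definition Phi (V1 D1V2 : R -> R -> R) x y := Psi D1V2 x y - V1 x y.

Lemma green_inner V1 V2 D1V2 D2V1 Rad r x : GreenHyp V1 V2 D1V2 D2V1 Rad -> 0 < r < Rad ->
  - r <= x <= r ->
  RInt (fun y => D1V2 x y - D2V1 x y) (- sqrt (r ^ 2 - x ^ 2)) (sqrt (r ^ 2 - x ^ 2))
  = Phi V1 D1V2 x (sqrt (r ^ 2 - x ^ 2)) - Phi V1 D1V2 x (- sqrt (r ^ 2 - x ^ 2)).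
Proof.
  intros HG Hr Hx. set (h := sqrt (r ^ 2 - x ^ 2)).
  assert (Hh : 0 <= h) by apply sqrt_pos.
  assert (Hin : forall u, Rabs u <= h -> x ^ 2 + u ^ 2 < Rad ^ 2).
  { intros u Hu. apply sq_le_abs in Hu. pose proof (sqrt_sq_le x r (Rlt_le _ _ (proj1 Hr)) Hx).
    fold h in H. assert (r ^ 2 < Rad ^ 2) by nra. lra. }
  assert (EX : forall a b, (forall u, Rmin a b <= u <= Rmax a b -> Rabs u <= h) ->
     ex_RInt (D1V2 x) a b /\ ex_RInt (D2V1 x) a b).
  { intros a b Hab. split; apply ex_RInt_seg; intros u Hu; apply (HG x u (Hin u (Hab u Hu))). }
  destruct (EX (- h) h) as [E1 E2]; [intros u Hu; apply between_abs; auto|].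
  destruct (EX 0 (- h)) as [E3 _]; [intros u Hu; apply between_abs; auto|].
  change (RInt (fun y => D1V2 x y - D2V1 x y) (- h) h = Phi V1 D1V2 x h - Phi V1 D1V2 x (- h)).
  rewrite (RInt_minusR (D1V2 x) (D2V1 x)) by assumption.
  assert (I1 : RInt (D1V2 x) (- h) h = Psi D1V2 x h - Psi D1V2 x (- h)).
  { unfold Psi. change (@eq R (RInt (D1V2 x) (- h) h) (RInt (D1V2 x) 0 h - RInt (D1V2 x) 0 (- h))).
    rewrite <- (RInt_ChaslesR (D1V2 x) 0 (- h) h E3 E1). lra. }
  assert (I2 : RInt (D2V1 x) (- h) h = V1 x h - V1 x (- h)).
  { apply is_RInt_unique.
    apply (is_RInt_derive (V := R_CompleteNormedModule) (V1 x) (D2V1 x)).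
    - intros u Hu. apply is_derive_Reals. apply (HG x u (Hin u (between_abs u h (or_introl Hu) Hh))).
    - intros u Hu. apply (c2_comp D2V1 (fun _ => x) (fun t => t) u); [| apply cont_const| apply cont_id].
      apply (HG x u (Hin u (between_abs u h (or_introl Hu) Hh))). }
  rewrite I1, I2. unfold Phi. lra.
Qed.

Lemma RInt_oppR (f : R -> R) a b : ex_RInt f a b -> RInt (fun x => - f x) a b = - RInt f a b.
Proof. intros H. exact (RInt_opp (V := R_CompleteNormedModule) f a b H). Qed.

Lemma ex_RInt_contR (f : R -> R) a b : (forall z, Rmin a b <= z <= Rmax a b -> continuous f z) -> ex_RInt f a b.
Proof. intros H. exact (ex_RInt_continuous (V := R_CompleteNormedModule) f a b H). Qed.

Lemma rsq_lt r Rad : 0 < r < Rad -> r ^ 2 < Rad ^ 2.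
Proof. intros. nra. Qed.

Lemma phi_cont V1 V2 D1V2 D2V1 Rad x y : GreenHyp V1 V2 D1V2 D2V1 Rad -> x ^ 2 + y ^ 2 < Rad ^ 2 ->
  continuity_2d_pt (Phi V1 D1V2) x y.
Proof.
  intros HG H. unfold Phi. apply continuity_2d_pt_minus.
  - apply (psi_cont D1V2 Rad x y H). intros a b Hab. apply (HG a b Hab).
  - apply (HG x y H).
Qed.

Lemma circ_cont (F : R -> R -> R) r t : continuity_2d_pt F (r * cos t) (r * sin t) ->
  continuous (fun t => F (r * cos t) (r * sin t)) t.
Proof. intros H. apply (c2_comp F (fun t => r * cos t) (fun t => r * sin t)); auto using cont_rcos, cont_rsin. Qed.

Lemma cont_multR (f g : R -> R) x : continuous f x -> continuous g x -> continuous (fun t => f t * g t) x.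
Proof. intros H1 H2. exact (continuous_mult f g x H1 H2). Qed.
Lemma cont_plusR (f g : R -> R) x : continuous f x -> continuous g x -> continuous (fun t => f t + g t) x.
Proof. intros H1 H2. exact (continuous_plus f g x H1 H2). Qed.
Lemma cont_minusR (f g : R -> R) x : continuous f x -> continuous g x -> continuous (fun t => f t - g t) x.
Proof. intros H1 H2. exact (continuous_minus f g x H1 H2). Qed.
Lemma cont_oppR (f : R -> R) x : continuous f x -> continuous (fun t => - f t) x.
Proof. intros H1. exact (continuous_opp f x H1). Qed.

Lemma h_cont r x : continuous (fun x => sqrt (r ^ 2 - x ^ 2)) x.
Proof.
  apply continuous_sqrt_comp. apply (ex_derive_continuous (K:=R_AbsRing) (V:=R_NormedModule)).
  auto_derive. auto.
Qed.

Lemma circ_phi_cont V1 V2 D1V2 D2V1 Rad r t : GreenHyp V1 V2 D1V2 D2V1 Rad -> 0 < r < Rad ->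
  continuous (fun t => r * sin t * Phi V1 D1V2 (r * cos t) (r * sin t)) t.
Proof.
  intros HG Hr. apply cont_multR; [apply cont_rsin|].
  apply (circ_cont (Phi V1 D1V2)). apply (phi_cont V1 V2 D1V2 D2V1 Rad); auto.
  rewrite circle_pt. now apply rsq_lt.
Qed.

Lemma sqrt_circ r t : 0 <= r * sin t -> sqrt (r ^ 2 - (r * cos t) ^ 2) = r * sin t.
Proof.
  intros H. replace (r ^ 2 - (r * cos t) ^ 2) with ((r * sin t) ^ 2) by (rewrite <- (circle_pt r t); ring).
  now apply sqrt_pow2.
Qed.

Lemma comp_upper V1 V2 D1V2 D2V1 Rad r : GreenHyp V1 V2 D1V2 D2V1 Rad -> 0 < r < Rad ->
  ex_RInt (fun x => Phi V1 D1V2 x (sqrt (r ^ 2 - x ^ 2))) (- r) r /\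
  RInt (fun x => Phi V1 D1V2 x (sqrt (r ^ 2 - x ^ 2))) (- r) r
  = RInt (fun t => r * sin t * Phi V1 D1V2 (r * cos t) (r * sin t)) 0 PI.
Proof.
  intros HG Hr. set (f := fun x => Phi V1 D1V2 x (sqrt (r ^ 2 - x ^ 2))).
  assert (Hf : forall x, - r <= x <= r -> continuous f x).
  { intros x Hx. unfold f. apply (c2_comp (Phi V1 D1V2) (fun t => t) (fun x => sqrt (r ^ 2 - x ^ 2)) x);
      [| apply cont_id| apply h_cont].
    apply (phi_cont V1 V2 D1V2 D2V1 Rad); auto.
    rewrite sqrt_sq_le by lra. now apply rsq_lt. }
  split.
  { apply ex_RInt_contR. intros z Hz. apply Hf. rewrite Rmin_left, Rmax_right in Hz; lra. }
  pose proof (RInt_comp (V := R_CompleteNormedModule) f (fun t => r * cos t) (fun t => - (r * sin t)) PI 0) as EQ.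
  cbv beta in EQ. rewrite cos_PI, cos_0 in EQ. replace (r * -1) with (- r) in EQ by ring. rewrite Rmult_1_r in EQ.
  rewrite <- EQ.
  - assert (EG : ex_RInt (fun t => r * sin t * Phi V1 D1V2 (r * cos t) (r * sin t)) 0 PI).
    { apply ex_RInt_contR. intros z _. apply (circ_phi_cont V1 V2 D1V2 D2V1 Rad); auto. }
    rewrite (RInt_ext _ (fun t => - (r * sin t * Phi V1 D1V2 (r * cos t) (r * sin t)))).
    + rewrite RInt_oppR by (now apply ex_RInt_swap).
      rewrite (RInt_swapR _ 0 PI EG). lra.
    + intros t Ht. rewrite Rmin_right, Rmax_left in Ht by (pose proof PI_RGT_0; lra).
      unfold scal; simpl; unfold mult; simpl. unfold f.
      rewrite sqrt_circ; [ring|]. apply Rmult_le_pos; [lra| apply sin_ge_0; lra].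
  - intros t _. apply Hf. pose proof (COS_bound t). split; nra.
  - intros t _. split.
    + auto_derive; auto. ring.
    + apply cont_oppR, cont_rsin.
Qed.

Lemma sqrt_circ' r t : r * sin t <= 0 -> - sqrt (r ^ 2 - (r * cos t) ^ 2) = r * sin t.
Proof.
  intros H. replace (r ^ 2 - (r * cos t) ^ 2) with ((- (r * sin t)) ^ 2) by (rewrite <- (circle_pt r t); ring).
  rewrite sqrt_pow2; lra.
Qed.

Lemma comp_lower V1 V2 D1V2 D2V1 Rad r : GreenHyp V1 V2 D1V2 D2V1 Rad -> 0 < r < Rad ->
  ex_RInt (fun x => Phi V1 D1V2 x (- sqrt (r ^ 2 - x ^ 2))) (- r) r /\
  RInt (fun x => Phi V1 D1V2 x (- sqrt (r ^ 2 - x ^ 2))) (- r) r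
  = RInt (fun t => - (r * sin t * Phi V1 D1V2 (r * cos t) (r * sin t))) PI (2 * PI).
Proof.
  intros HG Hr. set (f := fun x => Phi V1 D1V2 x (- sqrt (r ^ 2 - x ^ 2))).
  assert (Hf : forall x, - r <= x <= r -> continuous f x).
  { intros x Hx. unfold f. apply (c2_comp (Phi V1 D1V2) (fun t => t) (fun x => - sqrt (r ^ 2 - x ^ 2)) x);
      [| apply cont_id| apply cont_oppR, h_cont].
    apply (phi_cont V1 V2 D1V2 D2V1 Rad); auto.
    replace ((- sqrt (r ^ 2 - x ^ 2)) ^ 2) with ((sqrt (r ^ 2 - x ^ 2)) ^ 2) by ring.
    rewrite sqrt_sq_le by lra. now apply rsq_lt. }
  split.
  { apply ex_RInt_contR. intros z Hz. apply Hf. rewrite Rmin_left, Rmax_right in Hz; lra. }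
  pose proof (RInt_comp (V := R_CompleteNormedModule) f (fun t => r * cos t) (fun t => - (r * sin t)) PI (2 * PI)) as EQ.
  cbv beta in EQ. rewrite cos_PI, cos_2PI in EQ. replace (r * -1) with (- r) in EQ by ring. rewrite Rmult_1_r in EQ.
  rewrite <- EQ.
  - apply RInt_ext. intros t Ht. pose proof PI_RGT_0.
    rewrite Rmin_left, Rmax_right in Ht by lra.
    unfold scal; simpl; unfold mult; simpl. unfold f.
    rewrite sqrt_circ'; [ring|]. assert (sin t <= 0) by (apply sin_le_0; lra). nra.
  - intros t _. apply Hf. pose proof (COS_bound t). split; nra.
  - intros t _. split.
    + auto_derive; auto. ring.
    + apply cont_oppR, cont_rsin.
Qed.

Lemma green_phi V1 V2 D1V2 D2V1 Rad r : GreenHyp V1 V2 D1V2 D2V1 Rad -> 0 < r < Rad ->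
  is_RInt (fun x => RInt (fun y => D1V2 x y - D2V1 x y) (- sqrt (r ^ 2 - x ^ 2)) (sqrt (r ^ 2 - x ^ 2))) (- r) r
    (RInt (fun t => r * sin t * Phi V1 D1V2 (r * cos t) (r * sin t)) 0 (2 * PI)).
Proof.
  intros HG Hr.
  destruct (comp_upper V1 V2 D1V2 D2V1 Rad r HG Hr) as [EU RU].
  destruct (comp_lower V1 V2 D1V2 D2V1 Rad r HG Hr) as [EL RL].
  set (G := fun t => r * sin t * Phi V1 D1V2 (r * cos t) (r * sin t)).
  assert (EG : forall a b, ex_RInt G a b).
  { intros a b. apply ex_RInt_contR. intros z _. apply (circ_phi_cont V1 V2 D1V2 D2V1 Rad); auto. }
  apply (is_RInt_ext (V := R_CompleteNormedModule) (fun x => Phi V1 D1V2 x (sqrt (r ^ 2 - x ^ 2)) - Phi V1 D1V2 x (- sqrt (r ^ 2 - x ^ 2)))).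
  { intros x Hx. rewrite Rmin_left, Rmax_right in Hx by lra.
    rewrite (green_inner V1 V2 D1V2 D2V1 Rad r x HG Hr) by lra. reflexivity. }
  replace (RInt G 0 (2 * PI)) with (RInt (fun x => Phi V1 D1V2 x (sqrt (r ^ 2 - x ^ 2))) (- r) r - RInt (fun x => Phi V1 D1V2 x (- sqrt (r ^ 2 - x ^ 2))) (- r) r).
  - rewrite <- RInt_minusR by assumption.
    apply (RInt_correct (V := R_CompleteNormedModule)). apply ex_RInt_minusR; assumption.
  - rewrite RU, RL. fold G. rewrite RInt_oppR by apply EG.
    rewrite <- (RInt_ChaslesR G 0 PI (2 * PI)) by apply EG. fold G. lra.
Qed.

Section GP.
Variables (V1 V2 D1V2 D2V1 : R -> R -> R) (Rad r : R).
Hypothesis HG : GreenHyp V1 V2 D1V2 D2V1 Rad.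
Hypothesis Hr : 0 < r < Rad.

Let Rg t u := (r * cos t) ^ 2 + u ^ 2 < Rad ^ 2.
Let f t u := V2 (r * cos t) u.
Let E t u := D1V2 (r * cos t) u * (- (r * sin t)).

Lemma gp_F1 t u : Rg t u -> is_derive (fun z => f z u) t (E t u).
Proof.
  intros H. apply is_derive_Reals. unfold f, E.
  assert (H1 : derivable_pt_lim (fun z => r * cos z) t (- (r * sin t))).
  { apply is_derive_Reals. auto_derive; auto. ring. }
  assert (H2 := proj1 (proj2 (proj2 (proj2 (proj2 (HG (r * cos t) u H)))))).
  exact (derivable_pt_lim_comp (fun z => r * cos z) (fun x => V2 x u) t _ _ H1 H2).
Qed.

Lemma gp_F2 t u : Rg t u -> Derive (fun z => f z u) t = E t u.
Proof. intros H. apply is_derive_unique. now apply gp_F1. Qed.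

Lemma gp_F3 t u : Rg t u -> continuity_2d_pt E t u.
Proof.
  intros H. unfold E. apply continuity_2d_pt_mult.
  - apply (c2_comp1 D1V2 (fun t => r * cos t)); [apply (HG _ _ H)| apply cont_rcos].
  - apply c2_of_1d. apply cont_oppR, cont_rsin.
Qed.

Lemma gp_open t u : Rg t u -> exists d, 0 < d /\ forall t' u', Rabs (t' - t) < d -> Rabs (u' - u) < d -> Rg t' u'.
Proof.
  intros H. destruct (box_gen r Rad t u (proj1 Hr) H) as [d [Hd Hb]].
  exists d. split; auto. intros t' u' H1 H2. apply Hb; auto.
  apply abs_le_shift. lra.
Qed.

Lemma gp_F4 t u : Rg t u -> continuity_2d_pt (fun t u => Derive (fun z => f z u) t) t u.
Proof.
  intros H. apply continuity_2d_pt_ext_loc with E; [| now apply gp_F3].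
  destruct (gp_open t u H) as [d [Hd Hb]]. exists (mkposreal d Hd). simpl.
  intros t' u' H1 H2. symmetry. apply gp_F2. now apply Hb.
Qed.

Lemma gp_Rg_circ t0 : exists d, 0 < d /\ forall t u, Rabs (t - t0) < d -> Rabs u <= Rabs (r * sin t0) + d -> Rg t u.
Proof.
  apply (box_gen r Rad t0 (r * sin t0) (proj1 Hr)). rewrite circle_pt. now apply rsq_lt.
Qed.

Lemma gp_seg t a b : (forall u, Rmin a b <= u <= Rmax a b -> Rg t u) -> ex_RInt (f t) a b.
Proof.
  intros H. apply (ex_RInt_seg (fun a b => V2 (r * cos a) b)). intros u Hu.
  apply (c2_comp1 V2 (fun t => r * cos t)); [apply (HG _ _ (H u Hu))| apply cont_rcos].
Qed.

Definition gp_P t := RInt (fun u => V2 (r * cos t) u) 0 (r * sin t).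
Definition gp_dP t := - (r * sin t) * Psi D1V2 (r * cos t) (r * sin t) + V2 (r * cos t) (r * sin t) * (r * cos t).

Lemma bet_bound u a b e : 0 <= e -> Rmin a (b - e) <= u <= Rmax a (b + e) -> a = 0 -> Rabs u <= Rabs b + e.
Proof.
  intros He Hu ->. apply Rabs_le. unfold Rmin, Rmax in Hu.
  unfold Rabs; destruct (Rcase_abs b); destruct (Rle_dec 0 (b - e)); destruct (Rle_dec 0 (b + e)); lra.
Qed.

Lemma gp_deriv t0 : is_derive gp_P t0 (gp_dP t0).
Proof.
  destruct (gp_Rg_circ t0) as [d [Hd Hb]].
  assert (Hd2 : 0 < d / 2) by lra.
  assert (Hbd : forall y, Rabs (y - t0) < d -> forall u, Rmin 0 (r * sin t0 - d / 2) <= u <= Rmax 0 (r * sin t0 + d / 2) -> Rg y u).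
  { intros y Hy u Hu. apply Hb; auto. eapply Rle_trans; [apply (bet_bound u 0 (r * sin t0) (d / 2)); auto; lra| lra]. }
  assert (Hbd0 : forall y, Rabs (y - t0) < d -> forall u, Rmin 0 (r * sin t0) <= u <= Rmax 0 (r * sin t0) -> Rg y u).
  { intros y Hy u Hu. apply Hbd; auto. unfold Rmin, Rmax in *.
    destruct (Rle_dec 0 (r * sin t0)), (Rle_dec 0 (r * sin t0 - d / 2)), (Rle_dec 0 (r * sin t0 + d / 2)); lra. }
  pose proof (is_derive_RInt_param_bound_comp_aux3 f 0 (fun t => r * sin t) t0 (r * cos t0)) as D.
  unfold gp_P. eapply is_derive_ext; [intros z; reflexivity|].
  replace (gp_dP t0) with (RInt (fun u => Derive (fun z => f z u) t0) 0 (r * sin t0) + f t0 (r * sin t0) * (r * cos t0)).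
  - apply D.
    + apply locally_R. exists (mkposreal d Hd). intros y Hy. apply gp_seg. intros u Hu. apply Hbd0; auto.
    + exists (mkposreal _ Hd2). apply locally_R. exists (mkposreal d Hd). intros y Hy. simpl.
      apply gp_seg. intros u Hu. apply Hb; auto.
      assert (Rabs (u - r * sin t0) <= d / 2).
      { apply Rabs_le. unfold Rmin, Rmax in Hu. destruct (Rle_dec (r * sin t0 - d / 2) (r * sin t0 + d / 2)); lra. }
      pose proof (abs_le_shift _ _ _ H). lra.
    + auto_derive; auto. ring.
    + exists (mkposreal _ Hd2). apply locally_R. exists (mkposreal d Hd). intros y Hy u Hu. simpl in *.
      exists (E y u). apply gp_F1. apply Hbd; auto.
    + intros u Hu. apply gp_F4. apply Hbd0; auto. rewrite Rminus_eq_0, Rabs_R0; lra.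
    + exists (mkposreal d Hd). intros t' u' H1 H2. simpl in *. apply gp_F4. apply Hb; auto.
      pose proof (abs_le_shift _ _ _ (Rlt_le _ _ H2)). lra.
    + apply continuity_pt_filterlim.
      apply (c2_comp V2 (fun _ => r * cos t0) (fun u => u) (r * sin t0)); [| apply cont_const| apply cont_id].
      apply HG. rewrite circle_pt. now apply rsq_lt.
  - unfold gp_dP. rewrite (RInt_ext _ (fun u => - (r * sin t0) * D1V2 (r * cos t0) u)).
    + rewrite RInt_scalR. unfold Psi, f. reflexivity.
      apply (ex_RInt_seg D1V2). intros u Hu. apply HG.
      pose proof (Hbd0 t0 ltac:(rewrite Rminus_eq_0, Rabs_R0; lra) u Hu). exact H.
    + intros u Hu. rewrite gp_F2 by (apply Hbd0; [rewrite Rminus_eq_0, Rabs_R0; lra| lra]).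
      unfold E. apply Rmult_comm.
Qed.

End GP.

Lemma green V1 V2 D1V2 D2V1 Rad r : GreenHyp V1 V2 D1V2 D2V1 Rad -> 0 < r < Rad ->
  is_RInt (fun x => RInt (fun y => D1V2 x y - D2V1 x y) (- sqrt (r ^ 2 - x ^ 2)) (sqrt (r ^ 2 - x ^ 2))) (- r) r
    (RInt (fun t => (- V1 (r * cos t) (r * sin t) * sin t + V2 (r * cos t) (r * sin t) * cos t) * r) 0 (2 * PI)).
Proof.
  intros HG Hr.
  assert (Hc : forall t, (r * cos t) ^ 2 + (r * sin t) ^ 2 < Rad ^ 2) by (intros; rewrite circle_pt; now apply rsq_lt).
  assert (CdP : forall t, continuous (gp_dP V2 D1V2 r) t).
  { intros t. unfold gp_dP. apply cont_plusR; apply cont_multR.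
    - apply cont_oppR, cont_rsin.
    - apply (circ_cont (Psi D1V2)). apply (psi_cont D1V2 Rad); auto. intros a b Hab; apply (HG a b Hab).
    - apply (circ_cont V2). apply (HG _ _ (Hc t)).
    - apply cont_rcos. }
  assert (I0 : RInt (gp_dP V2 D1V2 r) 0 (2 * PI) = 0).
  { pose proof (is_RInt_derive (V := R_CompleteNormedModule) (gp_P V2 r) (gp_dP V2 D1V2 r) 0 (2 * PI)) as F.
    rewrite (is_RInt_unique _ _ _ _ (F ltac:(intros; apply (gp_deriv V1 V2 D1V2 D2V1 Rad r HG Hr)) ltac:(intros; apply CdP))).
    unfold gp_P. rewrite sin_2PI, sin_0, Rmult_0_r, !RInt_point. unfold minus, plus, opp, zero; simpl. ring. }
  pose proof (green_phi V1 V2 D1V2 D2V1 Rad r HG Hr) as GP.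
  eapply is_RInt_ext; [intros; reflexivity|].
  replace (RInt (fun t => (- V1 (r * cos t) (r * sin t) * sin t + V2 (r * cos t) (r * sin t) * cos t) * r) 0 (2 * PI))
    with (RInt (fun t => r * sin t * Phi V1 D1V2 (r * cos t) (r * sin t)) 0 (2 * PI)); [exact GP|].
  rewrite (RInt_ext (fun t => (- V1 (r * cos t) (r * sin t) * sin t + V2 (r * cos t) (r * sin t) * cos t) * r)
     (fun t => r * sin t * Phi V1 D1V2 (r * cos t) (r * sin t) + gp_dP V2 D1V2 r t)).
  - rewrite RInt_plusR. 
    + rewrite I0. lra.
    + apply ex_RInt_contR. intros z _. apply (circ_phi_cont V1 V2 D1V2 D2V1 Rad); auto.
    + apply ex_RInt_contR. intros z _. apply CdP.
  - intros t _. unfold gp_dP, Phi. rring.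
Qed.

Lemma c3_const c s x y : continuous3_at (fun _ _ _ => c) s x y.
Proof. intros e He. exists 1. split; [lra|]. intros. rewrite Rminus_eq_0, Rabs_R0. exact He. Qed.

Lemma c3_plus F G s x y : continuous3_at F s x y -> continuous3_at G s x y ->
  continuous3_at (fun s x y => F s x y + G s x y) s x y.
Proof.
  intros HF HG e He. destruct (HF (e / 2)) as [d1 [Hd1 H1]]; [lra|].
  destruct (HG (e / 2)) as [d2 [Hd2 H2]]; [lra|].
  exists (Rmin d1 d2). split; [now apply Rmin_glb_lt|].
  intros s' x' y' Hs Hx Hy.
  pose proof (Rmin_l d1 d2). pose proof (Rmin_r d1 d2).
  specialize (H1 s' x' y' ltac:(lra) ltac:(lra) ltac:(lra)).
  specialize (H2 s' x' y' ltac:(lra) ltac:(lra) ltac:(lra)).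
  replace (F s' x' y' + G s' x' y' - (F s x y + G s x y)) with ((F s' x' y' - F s x y) + (G s' x' y' - G s x y)) by ring.
  eapply Rle_lt_trans; [apply Rabs_triang| lra].
Qed.

Lemma c3_opp F s x y : continuous3_at F s x y -> continuous3_at (fun s x y => - F s x y) s x y.
Proof.
  intros HF e He. destruct (HF e He) as [d [Hd H]]. exists d. split; auto.
  intros. replace (- F s' x' y' - - F s x y) with (- (F s' x' y' - F s x y)) by ring.
  rewrite Rabs_Ropp. auto.
Qed.

Lemma c3_mult F G s x y : continuous3_at F s x y -> continuous3_at G s x y ->
  continuous3_at (fun s x y => F s x y * G s x y) s x y.
Proof.
  intros HF HG e He.
  set (a := Rabs (F s x y)). set (b := Rabs (G s x y)).
  assert (Ha : 0 <= a) by apply Rabs_pos. assert (Hb : 0 <= b) by apply Rabs_pos.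
  set (k := Rmin 1 (e / (a + b + 2))).
  assert (Hk : 0 < k) by (apply Rmin_glb_lt; [lra| apply Rdiv_lt_0_compat; lra]).
  assert (Hk1 : k <= 1) by apply Rmin_l.
  assert (Hk2 : k * (a + b + 2) <= e).
  { apply Rle_trans with (e / (a + b + 2) * (a + b + 2)).
    - apply Rmult_le_compat_r; [lra| apply Rmin_r].
    - right. field. lra. }
  destruct (HF k Hk) as [d1 [Hd1 H1]]. destruct (HG k Hk) as [d2 [Hd2 H2]].
  exists (Rmin d1 d2). split; [now apply Rmin_glb_lt|].
  intros s' x' y' Hs Hx Hy.
  pose proof (Rmin_l d1 d2). pose proof (Rmin_r d1 d2).
  specialize (H1 s' x' y' ltac:(lra) ltac:(lra) ltac:(lra)).
  specialize (H2 s' x' y' ltac:(lra) ltac:(lra) ltac:(lra)).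
  replace (F s' x' y' * G s' x' y' - F s x y * G s x y) with
    ((F s' x' y' - F s x y) * G s' x' y' + F s x y * (G s' x' y' - G s x y)) by ring.
  eapply Rle_lt_trans; [apply Rabs_triang|]. rewrite !Rabs_mult.
  assert (HG' : Rabs (G s' x' y') <= b + k).
  { unfold b. replace (G s' x' y') with (G s x y + (G s' x' y' - G s x y)) by ring.
    eapply Rle_trans; [apply Rabs_triang| lra]. }
  assert (Rabs (F s' x' y' - F s x y) * Rabs (G s' x' y') <= k * (b + k)).
  { apply Rmult_le_compat; try apply Rabs_pos; lra. }
  assert (Rabs (F s x y) * Rabs (G s' x' y' - G s x y) <= a * k).
  { fold a. apply Rmult_le_compat_l; lra. }
  nra.
Qed.

Lemma c3_minus F G s x y : continuous3_at F s x y -> continuous3_at G s x y ->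
  continuous3_at (fun s x y => F s x y - G s x y) s x y.
Proof. intros. apply (c3_plus F (fun s x y => - G s x y)); auto. now apply c3_opp. Qed.

Lemma c3_pow2 F s x y : continuous3_at F s x y -> continuous3_at (fun s x y => F s x y ^ 2) s x y.
Proof.
  intros H. assert (E : (fun s x y => F s x y ^ 2) = (fun s x y => F s x y * F s x y)).
  { do 3 (apply functional_extensionality; intro). ring. }
  rewrite E. now apply c3_mult.
Qed.

Lemma c3_fix_s F s x y : continuous3_at F s x y -> continuity_2d_pt (fun u v => F s u v) x y.
Proof.
  intros H eps. destruct (H eps (cond_pos eps)) as [d [Hd Hd']].
  exists (mkposreal d Hd). intros u v Hu Hv. apply Hd'; auto. rewrite Rminus_eq_0, Rabs_R0. lra.
Qed.

Lemma c3_fix_y F s x y : continuous3_at F s x y -> continuity_2d_pt (fun u v => F u v y) s x.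
Proof.
  intros H eps. destruct (H eps (cond_pos eps)) as [d [Hd Hd']].
  exists (mkposreal d Hd). intros u v Hu Hv. apply Hd'; auto. rewrite Rminus_eq_0, Rabs_R0. lra.
Qed.

Lemma c3_fix_x F s x y : continuous3_at F s x y -> continuity_2d_pt (fun u v => F u x v) s y.
Proof.
  intros H eps. destruct (H eps (cond_pos eps)) as [d [Hd Hd']].
  exists (mkposreal d Hd). intros u v Hu Hv. apply Hd'; auto. rewrite Rminus_eq_0, Rabs_R0. lra.
Qed.

Lemma c3_circ F r s t : 0 <= r -> continuous3_at F s (r * cos t) (r * sin t) ->
  continuity_2d_pt (fun u v => F u (r * cos v) (r * sin v)) s t.
Proof.
  intros Hr H eps. destruct (H eps (cond_pos eps)) as [d [Hd Hd']].
  assert (Hd2 : 0 < Rmin d (d / (r + 1))) by (apply Rmin_glb_lt; [lra| apply Rdiv_lt_0_compat; lra]).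
  exists (mkposreal _ Hd2). simpl. intros u v Hu Hv.
  pose proof (Rmin_l d (d / (r + 1))). pose proof (Rmin_r d (d / (r + 1))).
  assert (Hrv : r * Rabs (v - t) < d).
  { apply Rle_lt_trans with ((r + 1) * Rabs (v - t)).
    - apply Rmult_le_compat_r; [apply Rabs_pos| lra].
    - apply Rlt_le_trans with ((r + 1) * (d / (r + 1))); [apply Rmult_lt_compat_l; lra| right; field; lra]. }
  apply Hd'.
  - lra.
  - replace (r * cos v - r * cos t) with (r * (cos v - cos t)) by ring.
    rewrite Rabs_mult, (Rabs_pos_eq r Hr). eapply Rle_lt_trans; [| exact Hrv].
    apply Rmult_le_compat_l; [lra| apply cos_lip].
  - replace (r * sin v - r * sin t) with (r * (sin v - sin t)) by ring.
    rewrite Rabs_mult, (Rabs_pos_eq r Hr). eapply Rle_lt_trans; [| exact Hrv].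
    apply Rmult_le_compat_l; [lra| apply sin_lip].
Qed.

Lemma dpl_cont f x l : derivable_pt_lim f x l -> continuity_pt f x.
Proof. intros H. apply derivable_continuous_pt. exists l. exact H. Qed.

Lemma diff2 (g g1 g2 : R -> R -> R) x y :
  locally_2d (fun u v => derivable_pt_lim (fun z => g z v) u (g1 u v)) x y ->
  continuity_2d_pt g1 x y ->
  derivable_pt_lim (fun z => g x z) y (g2 x y) ->
  differentiable_pt_lim g x y (g1 x y) (g2 x y).
Proof.
  intros [d0 H0] Hc Hd eps.
  assert (He2 : 0 < eps / 2) by (destruct eps; simpl; lra).
  destruct (Hc (mkposreal _ He2)) as [d1 H1]. simpl in H1.
  destruct (Hd (eps / 2) He2) as [d2 H2].
  assert (Hdd : 0 < Rmin d0 (Rmin d1 d2)) by (destruct d0, d1, d2; simpl; repeat apply Rmin_glb_lt; lra).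
  exists (mkposreal _ Hdd). simpl. intros u v Hu Hv.
  pose proof (Rmin_l d0 (Rmin d1 d2)). pose proof (Rmin_r d0 (Rmin d1 d2)).
  pose proof (Rmin_l d1 d2). pose proof (Rmin_r d1 d2).
  assert (P1 : Rabs (g u v - g x v - g1 x y * (u - x)) <= eps / 2 * Rabs (u - x)).
  { destruct (MVT_gen (fun z => g z v) x u (fun z => g1 z v)) as [c [Hc1 Hc2]].
    - intros z Hz. apply is_derive_Reals. apply H0.
      + apply Rle_lt_trans with (Rabs (u - x)); [| lra].
        unfold Rmin, Rmax in Hz. apply Rabs_le. destruct (Rle_dec x u); unfold Rabs; destruct (Rcase_abs (u - x)); lra.
      + lra.
    - intros z Hz. eapply dpl_cont. apply H0.
      + apply Rle_lt_trans with (Rabs (u - x)); [| lra].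
        unfold Rmin, Rmax in Hz. apply Rabs_le. destruct (Rle_dec x u); unfold Rabs; destruct (Rcase_abs (u - x)); lra.
      + lra.
    - simpl in Hc2. rewrite Hc2.
      replace (g1 c v * (u - x) - g1 x y * (u - x)) with ((g1 c v - g1 x y) * (u - x)) by ring.
      rewrite Rabs_mult. apply Rmult_le_compat_r; [apply Rabs_pos|]. left. apply H1; [|lra].
      apply Rle_lt_trans with (Rabs (u - x)); [| lra].
      unfold Rmin, Rmax in Hc1. apply Rabs_le. destruct (Rle_dec x u); unfold Rabs; destruct (Rcase_abs (u - x)); lra. }
  assert (P2 : Rabs (g x v - g x y - g2 x y * (v - y)) <= eps / 2 * Rabs (v - y)).
  { destruct (Req_dec v y) as [->|Hvy].
    - rewrite !Rminus_eq_0, Rmult_0_r, Rminus_0_r, Rabs_R0. lra.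
    - specialize (H2 (v - y) ltac:(lra) ltac:(lra)). replace (y + (v - y)) with v in H2 by ring.
      replace (g x v - g x y - g2 x y * (v - y)) with (((g x v - g x y) / (v - y) - g2 x y) * (v - y)) by (field; lra).
      rewrite Rabs_mult. apply Rmult_le_compat_r; [apply Rabs_pos| lra]. }
  replace (g u v - g x y - (g1 x y * (u - x) + g2 x y * (v - y))) with
    ((g u v - g x v - g1 x y * (u - x)) + (g x v - g x y - g2 x y * (v - y))) by ring.
  eapply Rle_trans; [apply Rabs_triang|].
  pose proof (Rmax_l (Rabs (u - x)) (Rabs (v - y))). pose proof (Rmax_r (Rabs (u - x)) (Rabs (v - y))).
  destruct eps as [e He]; simpl in *. nra.
Qed.

Section SM.
Variable O : R -> R -> R -> Prop.
Hypothesis hO : open3 O.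

Lemma open_s u v w : O u v w -> locally u (fun z => O z v w).
Proof.
  intros H. destruct (hO u v w H) as [d [Hd Hd']]. apply locally_R. exists (mkposreal d Hd).
  intros z Hz. apply Hd'; auto; rewrite Rminus_eq_0, Rabs_R0; lra.
Qed.
Lemma open_x u v w : O u v w -> locally v (fun z => O u z w).
Proof.
  intros H. destruct (hO u v w H) as [d [Hd Hd']]. apply locally_R. exists (mkposreal d Hd).
  intros z Hz. apply Hd'; auto; rewrite Rminus_eq_0, Rabs_R0; lra.
Qed.
Lemma open_y u v w : O u v w -> locally w (fun z => O u v z).
Proof.
  intros H. destruct (hO u v w H) as [d [Hd Hd']]. apply locally_R. exists (mkposreal d Hd).
  intros z Hz. apply Hd'; auto; rewrite Rminus_eq_0, Rabs_R0; lra.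
Qed.

Lemma Der_s f u v w : smooth_on O f -> O u v w -> Derive (fun t => f t v w) u = Dpart 0 f u v w.
Proof. intros Hf H. apply is_derive_unique, is_derive_Reals. exact (smooth_hp O f 0 u v w Hf H ltac:(lia)). Qed.
Lemma Der_x f u v w : smooth_on O f -> O u v w -> Derive (fun t => f u t w) v = Dpart 1 f u v w.
Proof. intros Hf H. apply is_derive_unique, is_derive_Reals. exact (smooth_hp O f 1 u v w Hf H ltac:(lia)). Qed.
Lemma Der_y f u v w : smooth_on O f -> O u v w -> Derive (fun t => f u v t) w = Dpart 2 f u v w.
Proof. intros Hf H. apply is_derive_unique, is_derive_Reals. exact (smooth_hp O f 2 u v w Hf H ltac:(lia)). Qed.

Lemma exd_s f u v w : smooth_on O f -> O u v w -> ex_derive (fun t => f t v w) u.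
Proof. intros Hf H. eexists. apply is_derive_Reals. exact (smooth_hp O f 0 u v w Hf H ltac:(lia)). Qed.
Lemma exd_x f u v w : smooth_on O f -> O u v w -> ex_derive (fun t => f u t w) v.
Proof. intros Hf H. eexists. apply is_derive_Reals. exact (smooth_hp O f 1 u v w Hf H ltac:(lia)). Qed.
Lemma exd_y f u v w : smooth_on O f -> O u v w -> ex_derive (fun t => f u v t) w.
Proof. intros Hf H. eexists. apply is_derive_Reals. exact (smooth_hp O f 2 u v w Hf H ltac:(lia)). Qed.

Lemma loc_eq_s (F G : R -> R) u (P : R -> Prop) : locally u P -> (forall z, P z -> F z = G z) -> locally u (fun z => F z = G z).
Proof. intros H E. eapply filter_imp; [| exact H]. exact E. Qed.

Lemma schwarz1 p s x y : smooth_on O p -> O s x y -> Dpart 0 (Dpart 1 p) s x y = Dpart 1 (Dpart 0 p) s x y.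
Proof.
  intros Hp H.
  set (f := fun a b => p a b y).
  assert (DD1 : forall u v, O u v y -> Derive (fun z => Derive (fun t => f z t) v) u = Dpart 0 (Dpart 1 p) u v y
     /\ ex_derive (fun z => Derive (fun t => f z t) v) u).
  { intros u v Huv.
    assert (L : locally u (fun z => Dpart 1 p z v y = Derive (fun t => f z t) v)).
    { apply (loc_eq_s _ _ u (fun z => O z v y)); [now apply open_s|]. intros z Hz. unfold f. symmetry. now apply Der_x. }
    split.
    - transitivity (Derive (fun z => Dpart 1 p z v y) u); [symmetry; exact (Derive_ext_loc _ _ u L)|].
      now apply Der_s; [apply smooth_Dpart|].
    - apply (ex_derive_ext_loc _ _ u L). apply exd_s; [apply smooth_Dpart| auto]; auto. }
  assert (DD2 : forall u v, O u v y -> Derive (fun z => Derive (fun t => f t z) u) v = Dpart 1 (Dpart 0 p) u v y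
     /\ ex_derive (fun z => Derive (fun t => f t z) u) v).
  { intros u v Huv.
    assert (L : locally v (fun z => Dpart 0 p u z y = Derive (fun t => f t z) u)).
    { apply (loc_eq_s _ _ v (fun z => O u z y)); [now apply open_x|]. intros z Hz. unfold f. symmetry. now apply Der_s. }
    split.
    - transitivity (Derive (fun z => Dpart 0 p u z y) v); [symmetry; exact (Derive_ext_loc _ _ v L)|].
      now apply Der_x; [apply smooth_Dpart|].
    - apply (ex_derive_ext_loc _ _ v L). apply exd_x; [apply smooth_Dpart| auto]; auto. }
  destruct (hO s x y H) as [d [Hd Hbox]].
  assert (Hb : forall u v, Rabs (u - s) < d -> Rabs (v - x) < d -> O u v y).
  { intros u v Hu Hv. apply Hbox; auto. rewrite Rminus_eq_0, Rabs_R0; lra. }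
  pose proof (Schwarz f s x) as SW.
  rewrite (proj1 (DD1 s x H)), (proj1 (DD2 s x H)) in SW. apply SW.
  - exists (mkposreal d Hd). simpl. intros u v Hu Hv. specialize (Hb u v Hu Hv).
    split; [unfold f; now apply exd_s|]. split; [unfold f; now apply exd_x|].
    split; [exact (proj2 (DD1 u v Hb))| exact (proj2 (DD2 u v Hb))].
  - apply continuity_2d_pt_ext_loc with (fun u v => Dpart 0 (Dpart 1 p) u v y).
    + exists (mkposreal d Hd). simpl. intros u v Hu Hv. symmetry. exact (proj1 (DD1 u v (Hb u v Hu Hv))).
    + apply c3_fix_y. apply smooth_cont with O; auto. do 2 apply smooth_Dpart. exact Hp.
  - apply continuity_2d_pt_ext_loc with (fun u v => Dpart 1 (Dpart 0 p) u v y).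
    + exists (mkposreal d Hd). simpl. intros u v Hu Hv. symmetry. exact (proj1 (DD2 u v (Hb u v Hu Hv))).
    + apply c3_fix_y. apply smooth_cont with O; auto. do 2 apply smooth_Dpart. exact Hp.
Qed.
Lemma schwarz2 p s x y : smooth_on O p -> O s x y -> Dpart 0 (Dpart 2 p) s x y = Dpart 2 (Dpart 0 p) s x y.
Proof.
  intros Hp H.
  set (f := fun a b => p a x b).
  assert (DD1 : forall u v, O u x v -> Derive (fun z => Derive (fun t => f z t) v) u = Dpart 0 (Dpart 2 p) u x v
     /\ ex_derive (fun z => Derive (fun t => f z t) v) u).
  { intros u v Huv.
    assert (L : locally u (fun z => Dpart 2 p z x v = Derive (fun t => f z t) v)).
    { apply (loc_eq_s _ _ u (fun z => O z x v)); [now apply open_s|]. intros z Hz. unfold f. symmetry. now apply Der_y. }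
    split.
    - transitivity (Derive (fun z => Dpart 2 p z x v) u); [symmetry; exact (Derive_ext_loc _ _ u L)|].
      now apply Der_s; [apply smooth_Dpart|].
    - apply (ex_derive_ext_loc _ _ u L). apply exd_s; [apply smooth_Dpart| auto]; auto. }
  assert (DD2 : forall u v, O u x v -> Derive (fun z => Derive (fun t => f t z) u) v = Dpart 2 (Dpart 0 p) u x v
     /\ ex_derive (fun z => Derive (fun t => f t z) u) v).
  { intros u v Huv.
    assert (L : locally v (fun z => Dpart 0 p u x z = Derive (fun t => f t z) u)).
    { apply (loc_eq_s _ _ v (fun z => O u x z)); [now apply open_y|]. intros z Hz. unfold f. symmetry. now apply Der_s. }
    split.
    - transitivity (Derive (fun z => Dpart 0 p u x z) v); [symmetry; exact (Derive_ext_loc _ _ v L)|].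
      now apply Der_y; [apply smooth_Dpart|].
    - apply (ex_derive_ext_loc _ _ v L). apply exd_y; [apply smooth_Dpart| auto]; auto. }
  destruct (hO s x y H) as [d [Hd Hbox]].
  assert (Hb : forall u v, Rabs (u - s) < d -> Rabs (v - y) < d -> O u x v).
  { intros u v Hu Hv. apply Hbox; auto. rewrite Rminus_eq_0, Rabs_R0; lra. }
  pose proof (Schwarz f s y) as SW.
  rewrite (proj1 (DD1 s y H)), (proj1 (DD2 s y H)) in SW. apply SW.
  - exists (mkposreal d Hd). simpl. intros u v Hu Hv. specialize (Hb u v Hu Hv).
    split; [unfold f; now apply exd_s|]. split; [unfold f; now apply exd_y|].
    split; [exact (proj2 (DD1 u v Hb))| exact (proj2 (DD2 u v Hb))].
  - apply continuity_2d_pt_ext_loc with (fun u v => Dpart 0 (Dpart 2 p) u x v).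
    + exists (mkposreal d Hd). simpl. intros u v Hu Hv. symmetry. exact (proj1 (DD1 u v (Hb u v Hu Hv))).
    + apply c3_fix_x. apply smooth_cont with O; auto. do 2 apply smooth_Dpart. exact Hp.
  - apply continuity_2d_pt_ext_loc with (fun u v => Dpart 2 (Dpart 0 p) u x v).
    + exists (mkposreal d Hd). simpl. intros u v Hu Hv. symmetry. exact (proj1 (DD2 u v (Hb u v Hu Hv))).
    + apply c3_fix_x. apply smooth_cont with O; auto. do 2 apply smooth_Dpart. exact Hp.
Qed.
Lemma chain_sm f r s t : smooth_on O f -> O s (r * cos t) (r * sin t) ->
  derivable_pt_lim (fun t => f s (r * cos t) (r * sin t)) t
    (Dpart 1 f s (r * cos t) (r * sin t) * (- (r * sin t)) + Dpart 2 f s (r * cos t) (r * sin t) * (r * cos t)).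
Proof.
  intros Hf H.
  apply (derivable_pt_lim_comp_2d (f s) (fun t => r * cos t) (fun t => r * sin t) t).
  - apply (diff2 (f s) (Dpart 1 f s) (Dpart 2 f s)).
    + destruct (hO _ _ _ H) as [d [Hd Hd']]. exists (mkposreal d Hd). simpl. intros u v Hu Hv.
      apply (smooth_hp O f 1 s u v Hf); [| lia]. apply Hd'; auto. rewrite Rminus_eq_0, Rabs_R0; lra.
    + apply c3_fix_s. apply smooth_cont with O; auto. now apply smooth_Dpart.
    + apply (smooth_hp O f 2 s _ _ Hf H). lia.
  - apply is_derive_Reals. auto_derive; auto. ring.
  - apply is_derive_Reals. auto_derive; auto. ring.
Qed.
End SM.

Lemma abs_2prod a b : Rabs (2 * (a * b)) <= a ^ 2 + b ^ 2.
Proof. pose proof (pow2_ge_0 (a + b)). pose proof (pow2_ge_0 (a - b)). apply Rabs_le. split; nra. Qed.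

Lemma key_ineq (d0r d0i d1r d1i d2r d2i rho F01 F02 F12 eps lam C c s : R) :
  1 <= C -> 1 <= C * lam -> 0 < eps -> 0 < lam -> s ^ 2 + c ^ 2 = 1 ->
  Rabs (- s * (2 * (d0r * d1i - d0i * d1r) + (1 - rho) * F01) + c * (2 * (d0r * d2i - d0i * d2r) + (1 - rho) * F02))
  <= 2 * C * (/ 2 * ((d0r ^ 2 + d0i ^ 2) + (d1r ^ 2 + d1i ^ 2) + (d2r ^ 2 + d2i ^ 2))
              + eps ^ 2 / 2 * (F01 ^ 2 + F02 ^ 2 + F12 ^ 2) + lam / (8 * eps ^ 2) * (rho - 1) ^ 2).
Proof.
  intros HC HCl He Hl Hsc.
  set (tr := - s * d1r + c * d2r). set (ti := - s * d1i + c * d2i). set (Ft := - s * F01 + c * F02).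
  replace (- s * (2 * (d0r * d1i - d0i * d1r) + (1 - rho) * F01) + c * (2 * (d0r * d2i - d0i * d2r) + (1 - rho) * F02))
    with (2 * (d0r * ti) + 2 * ((- d0i) * tr) + 2 * ((eps * Ft) * ((1 - rho) / (2 * eps)))) by (unfold tr, ti, Ft; field; lra).
  assert (A1 : tr ^ 2 <= d1r ^ 2 + d2r ^ 2).
  { assert (tr ^ 2 + (c * d1r + s * d2r) ^ 2 = (s ^ 2 + c ^ 2) * (d1r ^ 2 + d2r ^ 2)) by (unfold tr; ring).
    rewrite Hsc in H. match type of H with _ + ?z ^ 2 = _ => pose proof (pow2_ge_0 z) end. lra. }
  assert (A2 : ti ^ 2 <= d1i ^ 2 + d2i ^ 2).
  { assert (ti ^ 2 + (c * d1i + s * d2i) ^ 2 = (s ^ 2 + c ^ 2) * (d1i ^ 2 + d2i ^ 2)) by (unfold ti; ring).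
    rewrite Hsc in H. match type of H with _ + ?z ^ 2 = _ => pose proof (pow2_ge_0 z) end. lra. }
  assert (A3 : Ft ^ 2 <= F01 ^ 2 + F02 ^ 2).
  { assert (Ft ^ 2 + (c * F01 + s * F02) ^ 2 = (s ^ 2 + c ^ 2) * (F01 ^ 2 + F02 ^ 2)) by (unfold Ft; ring).
    rewrite Hsc in H. match type of H with _ + ?z ^ 2 = _ => pose proof (pow2_ge_0 z) end. lra. }
  eapply Rle_trans; [apply Rabs_triang|]. eapply Rle_trans; [apply Rplus_le_compat_r, Rabs_triang|].
  pose proof (abs_2prod d0r ti) as B1. pose proof (abs_2prod (- d0i) tr) as B2.
  pose proof (abs_2prod (eps * Ft) ((1 - rho) / (2 * eps))) as B3.
  assert (E3 : ((1 - rho) / (2 * eps)) ^ 2 = (rho - 1) ^ 2 / (4 * eps ^ 2)) by (field; lra).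
  rewrite E3 in B3.
  assert (E4 : lam / (8 * eps ^ 2) * (rho - 1) ^ 2 = lam * ((rho - 1) ^ 2 / (4 * eps ^ 2)) / 2) by (field; lra).
  rewrite E4.
  assert (P1 : 0 <= (rho - 1) ^ 2 / (4 * eps ^ 2)).
  { apply Rmult_le_pos; [apply pow2_ge_0| apply Rlt_le, Rinv_0_lt_compat; nra]. }
  assert (P2 : 0 <= eps ^ 2) by apply pow2_ge_0.
  assert (P3 : (rho - 1) ^ 2 / (4 * eps ^ 2) <= C * lam * ((rho - 1) ^ 2 / (4 * eps ^ 2))).
  { rewrite <- (Rmult_1_l ((rho - 1) ^ 2 / (4 * eps ^ 2))) at 1. apply Rmult_le_compat_r; lra. }
  replace ((eps * Ft) ^ 2) with (eps ^ 2 * Ft ^ 2) in B3 by ring.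
  assert (P4 : eps ^ 2 * Ft ^ 2 <= eps ^ 2 * (F01 ^ 2 + F02 ^ 2)) by (apply Rmult_le_compat_l; lra).
  assert (P5 : 0 <= eps ^ 2 * F12 ^ 2) by (apply Rmult_le_pos; [lra| apply pow2_ge_0]).
  assert (S : 0 <= d0r ^ 2 + d0i ^ 2 + (d1r ^ 2 + d1i ^ 2) + (d2r ^ 2 + d2i ^ 2) + eps ^ 2 * (F01 ^ 2 + F02 ^ 2 + F12 ^ 2)).
  { pose proof (pow2_ge_0 d0r). pose proof (pow2_ge_0 d0i). pose proof (pow2_ge_0 d1r). pose proof (pow2_ge_0 d1i).
    pose proof (pow2_ge_0 d2r). pose proof (pow2_ge_0 d2i). pose proof (pow2_ge_0 F01). pose proof (pow2_ge_0 F02).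
    pose proof (pow2_ge_0 F12). nra. }
  assert (R1 : d0r ^ 2 + d0i ^ 2 + (d1r ^ 2 + d1i ^ 2) + (d2r ^ 2 + d2i ^ 2) + eps ^ 2 * (F01 ^ 2 + F02 ^ 2 + F12 ^ 2)
      <= C * (d0r ^ 2 + d0i ^ 2 + (d1r ^ 2 + d1i ^ 2) + (d2r ^ 2 + d2i ^ 2) + eps ^ 2 * (F01 ^ 2 + F02 ^ 2 + F12 ^ 2))).
  { rewrite <- (Rmult_1_l (_ + eps ^ 2 * _)) at 1. apply Rmult_le_compat_r; lra. }
  replace ((- d0i) ^ 2) with (d0i ^ 2) in B2 by ring.
  replace (2 * C * (/ 2 * (d0r ^ 2 + d0i ^ 2 + (d1r ^ 2 + d1i ^ 2) + (d2r ^ 2 + d2i ^ 2)) + eps ^ 2 / 2 * (F01 ^ 2 + F02 ^ 2 + F12 ^ 2) +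
     lam * ((rho - 1) ^ 2 / (4 * eps ^ 2)) / 2))
    with (C * (d0r ^ 2 + d0i ^ 2 + (d1r ^ 2 + d1i ^ 2) + (d2r ^ 2 + d2i ^ 2) + eps ^ 2 * (F01 ^ 2 + F02 ^ 2 + F12 ^ 2))
          + C * lam * ((rho - 1) ^ 2 / (4 * eps ^ 2))) by (field; lra).
  lra.
Qed.

Definition djc (p q A : F3) (k i : nat) : F3 := fun s x y =>
  (- Dpart i q s x y) * (Dpart k p s x y + A s x y * q s x y)
  + (- q s x y) * (Dpart i (Dpart k p) s x y + (Dpart i A s x y * q s x y + A s x y * Dpart i q s x y))
  + (Dpart i p s x y * (Dpart k q s x y - A s x y * p s x y)
     + p s x y * (Dpart i (Dpart k q) s x y - (Dpart i A s x y * p s x y + A s x y * Dpart i p s x y))).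

Definition JJ (p q A0 A1 A2 : F3) (k : nat) : F3 := fun s x y =>
  jcur p q (Aof A0 A1 A2 k) k s x y + Aof A0 A1 A2 k s x y.

Definition dJ (p q A0 A1 A2 : F3) (k i : nat) : F3 := fun s x y =>
  djc p q (Aof A0 A1 A2 k) k i s x y + Dpart i (Aof A0 A1 A2 k) s x y.

Lemma dpl_lin (f1 f2 : R -> R) x l1 l2 a b c : is_derive f1 x l1 -> is_derive f2 x l2 ->
  is_derive (fun u => (- f1 u * a + f2 u * b) * c) x ((- l1 * a + l2 * b) * c).
Proof.
  intros H1 H2. apply is_derive_Reals in H1, H2. apply is_derive_Reals.
  pose proof (derivable_pt_lim_mult (plus_fct (mult_fct (opp_fct f1) (fct_cte a)) (mult_fct f2 (fct_cte b))) (fct_cte c) x _ _ (derivable_pt_lim_plus _ _ x _ _ (derivable_pt_lim_mult _ _ x _ _ (derivable_pt_lim_opp _ x _ H1) (derivable_pt_lim_const a x)) (derivable_pt_lim_mult _ _ x _ _ H2 (derivable_pt_lim_const b x))) (derivable_pt_lim_const c x)) as H.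
  unfold mult_fct, plus_fct, opp_fct, fct_cte in H.
  match type of H with derivable_pt_lim _ _ ?v => replace ((- l1 * a + l2 * b) * c) with v by ring end.
  exact H.
Qed.

Lemma c2_snd (f : R -> R) x y : continuous f y -> continuity_2d_pt (fun _ v => f v) x y.
Proof.
  intros Hf eps. destruct (cont_eps f y Hf eps) as [d Hd].
  exists d. intros u v Hu Hv. apply Hd. exact Hv.
Qed.

Definition bb (p q A0 A1 A2 : F3) r s t :=
  (- JJ p q A0 A1 A2 1 s (r * cos t) (r * sin t) * sin t + JJ p q A0 A1 A2 2 s (r * cos t) (r * sin t) * cos t) * r.
Definition Db (p q A0 A1 A2 : F3) r s t :=
  (- dJ p q A0 A1 A2 1 0 s (r * cos t) (r * sin t) * sin t + dJ p q A0 A1 A2 2 0 s (r * cos t) (r * sin t) * cos t) * r.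

Definition CHp (F : F3) r s t l := derivable_pt_lim (fun t => F s (r * cos t) (r * sin t)) t l.

Lemma ch_plus F G r s t l1 l2 : CHp F r s t l1 -> CHp G r s t l2 -> CHp (fun s x y => F s x y + G s x y) r s t (l1 + l2).
Proof. unfold CHp. intros H1 H2. exact (derivable_pt_lim_plus (fun t => F s (r * cos t) (r * sin t)) (fun t => G s (r * cos t) (r * sin t)) t l1 l2 H1 H2). Qed.
Lemma ch_minus F G r s t l1 l2 : CHp F r s t l1 -> CHp G r s t l2 -> CHp (fun s x y => F s x y - G s x y) r s t (l1 - l2).
Proof. unfold CHp. intros H1 H2. exact (derivable_pt_lim_minus (fun t => F s (r * cos t) (r * sin t)) (fun t => G s (r * cos t) (r * sin t)) t l1 l2 H1 H2). Qed.
Lemma ch_mult F G r s t l1 l2 : CHp F r s t l1 -> CHp G r s t l2 ->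
  CHp (fun s x y => F s x y * G s x y) r s t (l1 * G s (r * cos t) (r * sin t) + F s (r * cos t) (r * sin t) * l2).
Proof. unfold CHp. intros H1 H2. exact (derivable_pt_lim_mult (fun t => F s (r * cos t) (r * sin t)) (fun t => G s (r * cos t) (r * sin t)) t l1 l2 H1 H2). Qed.
Lemma ch_opp F r s t l1 : CHp F r s t l1 -> CHp (fun s x y => - F s x y) r s t (- l1).
Proof. unfold CHp. intros H1. exact (derivable_pt_lim_opp (fun t => F s (r * cos t) (r * sin t)) t l1 H1). Qed.
Lemma ch_val F r s t l l' : l = l' -> CHp F r s t l -> CHp F r s t l'.
Proof. intros; now subst. Qed.

Section Phys.
Variables (O : R -> R -> R -> Prop) (p q A0 A1 A2 : F3).
Hypothesis hO : open3 O.
Hypotheses (hp : smooth_on O p) (hq : smooth_on O q) (hA0 : smooth_on O A0) (hA1 : smooth_on O A1) (hA2 : smooth_on O A2).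

Lemma smA k : smooth_on O (Aof A0 A1 A2 k).
Proof. destruct k as [|[|k]]; simpl; assumption. Qed.

Ltac smt := repeat apply smooth_Dpart; first [assumption | apply smA].

Ltac hp_leaf := apply (smooth_hp O); [smt | assumption | assumption].
Ltac hp_build := repeat first [ apply hp_plus | apply hp_minus | apply hp_mult | apply hp_opp | hp_leaf ].

Lemma hp_jcur (A : F3) k i s x y : smooth_on O A -> O s x y -> (i <= 2)%nat ->
  has_partial i (jcur p q A k) s x y (djc p q A k i s x y).
Proof.
  intros HA H Hi. unfold jcur, Dre, Dim.
  eapply hp_val; [| hp_build]. unfold djc. ring.
Qed.

Lemma hp_JJ k i s x y : O s x y -> (i <= 2)%nat -> has_partial i (JJ p q A0 A1 A2 k) s x y (dJ p q A0 A1 A2 k i s x y).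
Proof.
  intros H Hi. unfold JJ, dJ. apply hp_plus.
  - apply hp_jcur; auto. apply smA.
  - apply (smooth_hp O); auto. apply smA.
Qed.

Lemma omega_eq s x y : O s x y ->
  omega p q A1 A2 s x y = / 2 * (dJ p q A0 A1 A2 2 1 s x y - dJ p q A0 A1 A2 1 2 s x y).
Proof.
  intros H. unfold omega, dJ. cbn [Aof].
  rewrite (Dpart_eq _ _ _ _ _ _ (hp_jcur A2 2 1 s x y hA2 H ltac:(lia))).
  rewrite (Dpart_eq _ _ _ _ _ _ (hp_jcur A1 1 2 s x y hA1 H ltac:(lia))).
  ring.
Qed.

Ltac c3_leaf := apply smooth_cont with O; [smt | assumption].
Ltac c3_build := repeat first [ apply c3_plus | apply c3_minus | apply c3_mult | apply c3_opp | apply c3_pow2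
   | apply c3_const | c3_leaf ].

Lemma c3_JJ k s x y : O s x y -> continuous3_at (JJ p q A0 A1 A2 k) s x y.
Proof. intros H. unfold JJ, jcur, Dre, Dim. c3_build. Qed.

Lemma c3_dJ k i s x y : O s x y -> continuous3_at (dJ p q A0 A1 A2 k i) s x y.
Proof. intros H. unfold dJ, djc. c3_build. Qed.

Lemma c3_e3d eps lam s x y : O s x y -> continuous3_at (e3d eps lam p q A0 A1 A2) s x y.
Proof. intros H. unfold e3d, Dsq, Dre, Dim, Fab. cbn [Aof]. c3_build. Qed.


Lemma disk_omega (Rad r s : R) : (forall x y, x ^ 2 + y ^ 2 < Rad ^ 2 -> O s x y) -> 0 < r < Rad ->
  disk_int (omega p q A1 A2 s) r = / 2 * RInt (fun t =>
    (- JJ p q A0 A1 A2 1 s (r * cos t) (r * sin t) * sin t + JJ p q A0 A1 A2 2 s (r * cos t) (r * sin t) * cos t) * r) 0 (2 * PI).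
Proof.
  intros HD Hr.
  set (V1 := fun x y => JJ p q A0 A1 A2 1 s x y). set (V2 := fun x y => JJ p q A0 A1 A2 2 s x y).
  set (D1V2 := fun x y => dJ p q A0 A1 A2 2 1 s x y). set (D2V1 := fun x y => dJ p q A0 A1 A2 1 2 s x y).
  assert (HG : GreenHyp V1 V2 D1V2 D2V1 Rad).
  { intros x y Hxy. pose proof (HD x y Hxy) as H.
    split; [apply c3_fix_s, c3_JJ; auto|]. split; [apply c3_fix_s, c3_JJ; auto|].
    split; [apply c3_fix_s, c3_dJ; auto|]. split; [apply c3_fix_s, c3_dJ; auto|].
    split; [exact (hp_JJ 2 1 s x y H ltac:(lia))| exact (hp_JJ 1 2 s x y H ltac:(lia))]. }
  pose proof (green V1 V2 D1V2 D2V1 Rad r HG Hr) as GR.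
  set (G := fun x => RInt (fun y => D1V2 x y - D2V1 x y) (- sqrt (r ^ 2 - x ^ 2)) (sqrt (r ^ 2 - x ^ 2))) in GR.
  unfold disk_int.
  assert (Inner : (fun x => Rint (fun y => omega p q A1 A2 s x y) (- sqrt (r ^ 2 - x ^ 2)) (sqrt (r ^ 2 - x ^ 2)))
     = (fun x => / 2 * G x)).
  { apply functional_extensionality. intros x. unfold G.
    destruct (Rle_dec (x ^ 2) (r ^ 2)) as [Hx|Hx].
    - set (h := sqrt (r ^ 2 - x ^ 2)).
      assert (Hin : forall u, Rmin (- h) h <= u <= Rmax (- h) h -> O s x u).
      { intros u Hu. apply HD. assert (0 <= h) by apply sqrt_pos.
        pose proof (between_abs u h (or_introl Hu) H) as Hu'. apply sq_le_abs in Hu'.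
        unfold h in Hu'. rewrite <- Rsqr_pow2 with (x := sqrt _), Rsqr_sqrt in Hu' by lra.
        pose proof (rsq_lt r Rad Hr). lra. }
      assert (ED : ex_RInt (fun y => D1V2 x y - D2V1 x y) (- h) h).
      { apply ex_RInt_contR. intros z Hz. apply (c2_comp (fun a b => D1V2 a b - D2V1 a b) (fun _ => x) (fun t => t) z);
          [| apply cont_const| apply cont_id].
        apply continuity_2d_pt_minus; apply c3_fix_s, c3_dJ; auto. }
      assert (EQ : forall y, Rmin (- h) h < y < Rmax (- h) h -> / 2 * (D1V2 x y - D2V1 x y) = omega p q A1 A2 s x y).
      { intros y Hy. rewrite omega_eq by (apply Hin; lra). reflexivity. }
      rewrite Rint_RInt.
      + rewrite <- (RInt_scalR _ _ _ _ ED). symmetry. apply RInt_ext. exact EQ.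
      + apply (ex_RInt_ext (fun y => / 2 * (D1V2 x y - D2V1 x y))); [exact EQ|]. now apply ex_RInt_scalR.
    - rewrite sqrt_neg_0 by lra. rewrite Ropp_0. rewrite Rint_RInt by apply ex_RInt_point.
      rewrite !RInt_point. unfold zero; simpl. ring. }
  rewrite Inner.
  pose proof (is_RInt_scal (V := R_CompleteNormedModule) G (- r) r (/ 2) _ GR) as GR2.
  rewrite Rint_RInt by (eexists; exact GR2).
  apply is_RInt_unique. exact GR2.
Qed.

Lemma Dbb r s t : O s (r * cos t) (r * sin t) -> is_derive (fun u => bb p q A0 A1 A2 r u t) s (Db p q A0 A1 A2 r s t).
Proof.
  intros H. unfold bb, Db. apply dpl_lin; apply is_derive_Reals.
  - exact (hp_JJ 1 0 s _ _ H ltac:(lia)).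
  - exact (hp_JJ 2 0 s _ _ H ltac:(lia)).
Qed.

Lemma cont_bb r s z : O s (r * cos z) (r * sin z) -> continuous (bb p q A0 A1 A2 r s) z.
Proof.
  intros H. unfold bb. apply cont_multR; [| apply cont_const].
  apply cont_plusR; apply cont_multR.
  - apply cont_oppR. apply (circ_cont (fun u v => JJ p q A0 A1 A2 1 s u v)). apply c3_fix_s, c3_JJ; auto.
  - apply (ex_derive_continuous (K:=R_AbsRing) (V:=R_NormedModule)). auto_derive. auto.
  - apply (circ_cont (fun u v => JJ p q A0 A1 A2 2 s u v)). apply c3_fix_s, c3_JJ; auto.
  - apply (ex_derive_continuous (K:=R_AbsRing) (V:=R_NormedModule)). auto_derive. auto.
Qed.

Lemma c2_Db r s t : 0 <= r -> O s (r * cos t) (r * sin t) ->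
  continuity_2d_pt (Db p q A0 A1 A2 r) s t.
Proof.
  intros Hr H. unfold Db. apply continuity_2d_pt_mult; [| apply continuity_2d_pt_const].
  apply continuity_2d_pt_plus; apply continuity_2d_pt_mult.
  - apply continuity_2d_pt_opp. apply (c3_circ (dJ p q A0 A1 A2 1 0)); auto. apply c3_dJ; auto.
  - apply c2_snd. apply (ex_derive_continuous (K:=R_AbsRing) (V:=R_NormedModule)). auto_derive. auto.
  - apply (c3_circ (dJ p q A0 A1 A2 2 0)); auto. apply c3_dJ; auto.
  - apply c2_snd. apply (ex_derive_continuous (K:=R_AbsRing) (V:=R_NormedModule)). auto_derive. auto.
Qed.

Lemma Kderiv (T r : R) : 0 <= r -> (forall s t, 0 <= s <= T -> O s (r * cos t) (r * sin t)) ->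
  forall s0, 0 < s0 < T ->
  is_derive (fun s => RInt (bb p q A0 A1 A2 r s) 0 (2 * PI)) s0 (RInt (Db p q A0 A1 A2 r s0) 0 (2 * PI)).
Proof.
  intros Hr HC s0 Hs0.
  assert (Hd : 0 < Rmin s0 (T - s0)) by (apply Rmin_glb_lt; lra).
  assert (Hin : forall y, Rabs (y - s0) < Rmin s0 (T - s0) -> 0 <= y <= T).
  { intros y Hy. pose proof (Rmin_l s0 (T - s0)). pose proof (Rmin_r s0 (T - s0)).
    apply Rlt_le, abs_bnd in Hy. lra. }
  eapply is_derive_ext; [intros; reflexivity|].
  replace (RInt (Db p q A0 A1 A2 r s0) 0 (2 * PI)) with
    (RInt (fun t => Derive (fun u => bb p q A0 A1 A2 r u t) s0) 0 (2 * PI)).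
  - apply (is_derive_RInt_param (bb p q A0 A1 A2 r)).
    + apply locally_R. exists (mkposreal _ Hd). simpl. intros y Hy t _.
      eexists. apply Dbb. apply HC. now apply Hin.
    + intros t _. apply continuity_2d_pt_ext_loc with (Db p q A0 A1 A2 r).
      * exists (mkposreal _ Hd). simpl. intros u v Hu Hv. symmetry. apply is_derive_unique. apply Dbb.
        apply HC. now apply Hin.
      * apply c2_Db; auto. apply HC. lra.
    + apply locally_R. exists (mkposreal _ Hd). simpl. intros y Hy.
      apply ex_RInt_contR. intros z _. apply cont_bb. apply HC. now apply Hin.
  - apply RInt_ext. intros t _. apply is_derive_unique. apply Dbb. apply HC. lra.
Qed.

Lemma ch_leaf f r s t : smooth_on O f -> O s (r * cos t) (r * sin t) ->
  CHp f r s t (Dpart 1 f s (r * cos t) (r * sin t) * (- (r * sin t)) + Dpart 2 f s (r * cos t) (r * sin t) * (r * cos t)).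
Proof. intros Hf H. unfold CHp. exact (chain_sm O hO f r s t Hf H). Qed.

Ltac ch_build := repeat first [ apply ch_plus | apply ch_minus | apply ch_mult | apply ch_opp
   | (apply ch_leaf; [smt | assumption]) ].

Lemma ch_J0 r s t : O s (r * cos t) (r * sin t) ->
  CHp (JJ p q A0 A1 A2 0) r s t
    (dJ p q A0 A1 A2 0 1 s (r * cos t) (r * sin t) * (- (r * sin t)) + dJ p q A0 A1 A2 0 2 s (r * cos t) (r * sin t) * (r * cos t)).
Proof.
  intros H. unfold JJ, jcur, Dre, Dim. cbn [Aof].
  eapply ch_val; [| ch_build]. unfold dJ, djc. cbn [Aof]. ring.
Qed.

Definition CHd r s t := dJ p q A0 A1 A2 0 1 s (r * cos t) (r * sin t) * (- (r * sin t))
   + dJ p q A0 A1 A2 0 2 s (r * cos t) (r * sin t) * (r * cos t).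

Lemma cont_circ3 (F : F3) r s t : O s (r * cos t) (r * sin t) -> continuous3_at F s (r * cos t) (r * sin t) ->
  continuous (fun t => F s (r * cos t) (r * sin t)) t.
Proof. intros H HF. apply (circ_cont (fun u v => F s u v)). now apply c3_fix_s. Qed.

Lemma cont_CHd r s t : O s (r * cos t) (r * sin t) -> continuous (CHd r s) t.
Proof.
  intros H. unfold CHd. apply cont_plusR; apply cont_multR.
  - apply (cont_circ3 (dJ p q A0 A1 A2 0 1)); auto. now apply c3_dJ.
  - apply cont_oppR, cont_rsin.
  - apply (cont_circ3 (dJ p q A0 A1 A2 0 2)); auto. now apply c3_dJ.
  - apply cont_rcos.
Qed.

Lemma int_CHd r s : (forall t, O s (r * cos t) (r * sin t)) -> RInt (CHd r s) 0 (2 * PI) = 0.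
Proof.
  intros H.
  pose proof (is_RInt_derive (V := R_CompleteNormedModule) (fun t => JJ p q A0 A1 A2 0 s (r * cos t) (r * sin t)) (CHd r s) 0 (2 * PI)) as F.
  rewrite (is_RInt_unique _ _ _ _ (F ltac:(intros; apply is_derive_Reals; apply ch_J0; apply H) ltac:(intros; apply cont_CHd; apply H))).
  cbv beta. rewrite cos_2PI, sin_2PI, cos_0, sin_0. unfold minus, plus, opp; simpl. ring.
Qed.

Lemma ident1 s x y : O s x y -> dJ p q A0 A1 A2 1 0 s x y - dJ p q A0 A1 A2 0 1 s x y =
  2 * ((Dpart 0 p s x y + A0 s x y * q s x y) * (Dpart 1 q s x y - A1 s x y * p s x y)
       - (Dpart 0 q s x y - A0 s x y * p s x y) * (Dpart 1 p s x y + A1 s x y * q s x y))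
  + (1 - (p s x y ^ 2 + q s x y ^ 2)) * (Dpart 0 A1 s x y - Dpart 1 A0 s x y).
Proof.
  intros H. unfold dJ, djc. cbn [Aof].
  rewrite (schwarz1 O hO p s x y hp H), (schwarz1 O hO q s x y hq H). ring.
Qed.

Lemma ident2 s x y : O s x y -> dJ p q A0 A1 A2 2 0 s x y - dJ p q A0 A1 A2 0 2 s x y =
  2 * ((Dpart 0 p s x y + A0 s x y * q s x y) * (Dpart 2 q s x y - A2 s x y * p s x y)
       - (Dpart 0 q s x y - A0 s x y * p s x y) * (Dpart 2 p s x y + A2 s x y * q s x y))
  + (1 - (p s x y ^ 2 + q s x y ^ 2)) * (Dpart 0 A2 s x y - Dpart 2 A0 s x y).
Proof.
  intros H. unfold dJ, djc. cbn [Aof].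
  rewrite (schwarz2 O hO p s x y hp H), (schwarz2 O hO q s x y hq H). ring.
Qed.

Lemma pt_bound eps lam C r s t : 1 <= C -> 1 <= C * lam -> 0 < eps -> 0 < lam -> 0 <= r ->
  O s (r * cos t) (r * sin t) ->
  Rabs (Db p q A0 A1 A2 r s t - CHd r s t) <= 2 * C * (e3d eps lam p q A0 A1 A2 s (r * cos t) (r * sin t) * r).
Proof.
  intros HC HCl He Hl Hr H.
  replace (Db p q A0 A1 A2 r s t - CHd r s t) with
    ((- sin t * (dJ p q A0 A1 A2 1 0 s (r * cos t) (r * sin t) - dJ p q A0 A1 A2 0 1 s (r * cos t) (r * sin t))
      + cos t * (dJ p q A0 A1 A2 2 0 s (r * cos t) (r * sin t) - dJ p q A0 A1 A2 0 2 s (r * cos t) (r * sin t))) * r)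
    by (unfold Db, CHd; ring).
  rewrite ident1, ident2 by exact H.
  rewrite Rabs_mult, (Rabs_pos_eq r Hr).
  replace (2 * C * (e3d eps lam p q A0 A1 A2 s (r * cos t) (r * sin t) * r))
    with (2 * C * e3d eps lam p q A0 A1 A2 s (r * cos t) (r * sin t) * r) by ring.
  apply Rmult_le_compat_r; [exact Hr|].
  set (X := r * cos t). set (Y := r * sin t).
  replace (e3d eps lam p q A0 A1 A2 s X Y) with
    (/ 2 * (((Dpart 0 p s X Y + A0 s X Y * q s X Y) ^ 2 + (Dpart 0 q s X Y - A0 s X Y * p s X Y) ^ 2)
        + ((Dpart 1 p s X Y + A1 s X Y * q s X Y) ^ 2 + (Dpart 1 q s X Y - A1 s X Y * p s X Y) ^ 2)
        + ((Dpart 2 p s X Y + A2 s X Y * q s X Y) ^ 2 + (Dpart 2 q s X Y - A2 s X Y * p s X Y) ^ 2))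
     + eps ^ 2 / 2 * ((Dpart 0 A1 s X Y - Dpart 1 A0 s X Y) ^ 2 + (Dpart 0 A2 s X Y - Dpart 2 A0 s X Y) ^ 2
                      + (Dpart 1 A2 s X Y - Dpart 2 A1 s X Y) ^ 2)
     + lam / (8 * eps ^ 2) * ((p s X Y ^ 2 + q s X Y ^ 2) - 1) ^ 2)
    by (unfold e3d, Dsq, Dre, Dim, Fab; cbn [Aof]; ring).
  apply key_ineq; auto.
  pose proof (sin2_cos2 t). unfold Rsqr in H0. lra.
Qed.

Lemma cont_Db r s t : 0 <= r -> O s (r * cos t) (r * sin t) -> continuous (Db p q A0 A1 A2 r s) t.
Proof.
  intros Hr H. apply (c2_comp (Db p q A0 A1 A2 r) (fun _ => s) (fun t => t) t); [| apply cont_const| apply cont_id].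
  now apply c2_Db.
Qed.

Lemma cont_e3dr eps lam r s t : O s (r * cos t) (r * sin t) ->
  continuous (fun t => e3d eps lam p q A0 A1 A2 s (r * cos t) (r * sin t) * r) t.
Proof.
  intros H. apply cont_multR; [| apply cont_const].
  apply (cont_circ3 (e3d eps lam p q A0 A1 A2)); auto. now apply c3_e3d.
Qed.

Lemma Kbound eps lam C r s : 1 <= C -> 1 <= C * lam -> 0 < eps -> 0 < lam -> 0 <= r ->
  (forall t, O s (r * cos t) (r * sin t)) ->
  Rabs (RInt (Db p q A0 A1 A2 r s) 0 (2 * PI)) <= 2 * C * RInt (fun t => e3d eps lam p q A0 A1 A2 s (r * cos t) (r * sin t) * r) 0 (2 * PI).
Proof.
  intros HC HCl He Hl Hr H.
  assert (H2P : 0 <= 2 * PI) by (pose proof PI_RGT_0; lra).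
  assert (ED : ex_RInt (Db p q A0 A1 A2 r s) 0 (2 * PI)) by (apply ex_RInt_contR; intros; apply cont_Db; auto).
  assert (EC : ex_RInt (CHd r s) 0 (2 * PI)) by (apply ex_RInt_contR; intros; apply cont_CHd; auto).
  assert (EE : ex_RInt (fun t => e3d eps lam p q A0 A1 A2 s (r * cos t) (r * sin t) * r) 0 (2 * PI))
    by (apply ex_RInt_contR; intros; apply cont_e3dr; auto).
  assert (EM : ex_RInt (fun t => Db p q A0 A1 A2 r s t - CHd r s t) 0 (2 * PI)) by (apply ex_RInt_minusR; auto).
  assert (Eq : RInt (Db p q A0 A1 A2 r s) 0 (2 * PI) = RInt (fun t => Db p q A0 A1 A2 r s t - CHd r s t) 0 (2 * PI)).
  { rewrite RInt_minusR by auto. rewrite int_CHd by auto. lra. }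
  rewrite Eq.
  set (e := fun t => e3d eps lam p q A0 A1 A2 s (r * cos t) (r * sin t) * r).
  assert (Up : RInt (fun t => Db p q A0 A1 A2 r s t - CHd r s t) 0 (2 * PI) <= RInt (fun t => 2 * C * e t) 0 (2 * PI)).
  { apply RInt_le; auto; [now apply ex_RInt_scalR|]. intros t _.
    pose proof (pt_bound eps lam C r s t HC HCl He Hl Hr (H t)).
    unfold e. pose proof (Rle_abs (Db p q A0 A1 A2 r s t - CHd r s t)). lra. }
  assert (Lo : RInt (fun t => - (2 * C * e t)) 0 (2 * PI) <= RInt (fun t => Db p q A0 A1 A2 r s t - CHd r s t) 0 (2 * PI)).
  { apply RInt_le; auto; [apply (ex_RInt_ext (fun t => -1 * (2 * C * e t))); [intros; rring| now do 2 apply ex_RInt_scalR]|].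
    intros t _. pose proof (pt_bound eps lam C r s t HC HCl He Hl Hr (H t)).
    unfold e. pose proof (Rabs_maj2 (Db p q A0 A1 A2 r s t - CHd r s t)). lra. }
  rewrite RInt_scalR in Up by exact EE. rewrite RInt_oppR, RInt_scalR in Lo by (auto; now apply ex_RInt_scalR).
  fold e. apply Rabs_le. lra.
Qed.

Lemma c2_bb r s t : 0 <= r -> O s (r * cos t) (r * sin t) ->
  continuity_2d_pt (bb p q A0 A1 A2 r) s t.
Proof.
  intros Hr H. unfold bb. apply continuity_2d_pt_mult; [| apply continuity_2d_pt_const].
  apply continuity_2d_pt_plus; apply continuity_2d_pt_mult.
  - apply continuity_2d_pt_opp. apply (c3_circ (JJ p q A0 A1 A2 1)); auto. apply c3_JJ; auto.
  - apply c2_snd. apply (ex_derive_continuous (K:=R_AbsRing) (V:=R_NormedModule)). auto_derive. auto.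
  - apply (c3_circ (JJ p q A0 A1 A2 2)); auto. apply c3_JJ; auto.
  - apply c2_snd. apply (ex_derive_continuous (K:=R_AbsRing) (V:=R_NormedModule)). auto_derive. auto.
Qed.

Lemma c2_e3dr eps lam r s t : 0 <= r -> O s (r * cos t) (r * sin t) ->
  continuity_2d_pt (fun u v => e3d eps lam p q A0 A1 A2 u (r * cos v) (r * sin v) * r) s t.
Proof.
  intros Hr H. apply continuity_2d_pt_mult; [| apply continuity_2d_pt_const].
  apply (c3_circ (e3d eps lam p q A0 A1 A2)); auto. apply c3_e3d; auto.
Qed.

End Phys.

Lemma pcw (f : R -> R -> R) a b c (P : R -> Prop) : a <= b ->
  (forall th, a <= th <= b -> continuity_2d_pt f c th) -> (forall u, P u -> ex_RInt (f u) a b) -> P c ->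
  forall eps, 0 < eps -> exists d, 0 < d /\ forall u, P u -> Rabs (u - c) < d ->
    Rabs (RInt (f u) a b - RInt (f c) a b) < eps.
Proof.
  intros Hab Hc Hex HPc eps He.
  assert (He' : 0 < eps / (b - a + 1)) by (apply Rdiv_lt_0_compat; lra).
  destruct (uniform_continuity_2d_1d' f a b c Hc (mkposreal _ He')) as [d Hd]. simpl in Hd.
  exists d. split; [apply cond_pos|]. intros u Hu Hud.
  rewrite <- RInt_minusR by auto.
  eapply Rle_lt_trans.
  - apply (RInt_abs_bound _ a b (eps / (b - a + 1))).
    + apply ex_RInt_minusR; auto.
    + intros th Hth. rewrite Rmin_left, Rmax_right in Hth by lra. left.
      pose proof (cond_pos d). apply Rlt_le, abs_bnd in Hud.
      apply (Hd th c th u); auto; try lra. rewrite Rminus_eq_0, Rabs_R0. apply cond_pos.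
  - rewrite Rabs_pos_eq by lra.
    apply Rlt_le_trans with ((b - a + 1) * (eps / (b - a + 1))).
    + apply Rmult_lt_compat_r; lra.
    + right. field. lra.
Qed.

Definition clamp a b x := Rmax a (Rmin b x).

Lemma clamp_in a b x : a <= b -> a <= clamp a b x <= b.
Proof. intros H. unfold clamp, Rmax, Rmin. repeat destruct Rle_dec; lra. Qed.
Lemma clamp_id a b x : a <= x <= b -> clamp a b x = x.
Proof. intros H. unfold clamp, Rmax, Rmin. repeat destruct Rle_dec; lra. Qed.
Lemma clamp_lip a b x y : a <= b -> Rabs (clamp a b x - clamp a b y) <= Rabs (x - y).
Proof.
  intros H. unfold clamp, Rmax, Rmin. repeat destruct Rle_dec; unfold Rabs; repeat destruct Rcase_abs; lra.
Qed.

Lemma clamp_cont (g : R -> R) a b : a <= b ->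
  (forall c, a <= c <= b -> forall eps, 0 < eps -> exists d, 0 < d /\
      forall u, a <= u <= b -> Rabs (u - c) < d -> Rabs (g u - g c) < eps) ->
  forall x, continuous (fun x => g (clamp a b x)) x.
Proof.
  intros Hab H x. apply eps_cont. intros eps.
  destruct (H (clamp a b x) (clamp_in a b x Hab) eps (cond_pos eps)) as [d [Hd Hd']].
  exists (mkposreal d Hd). simpl. intros y Hy. apply Hd'.
  - now apply clamp_in.
  - eapply Rle_lt_trans; [apply clamp_lip; auto| exact Hy].
Qed.

Lemma clamp_loc a b x : a < x < b -> locally x (fun y => clamp a b y = y).
Proof.
  intros H. apply locally_R.
  assert (Hd : 0 < Rmin (x - a) (b - x)) by (apply Rmin_glb_lt; lra).
  exists (mkposreal _ Hd). simpl. intros y Hy. apply clamp_id.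
  pose proof (Rmin_l (x - a) (b - x)). pose proof (Rmin_r (x - a) (b - x)).
  apply Rlt_le, abs_bnd in Hy. lra.
Qed.

Theorem lemma3p3 (T Rad eps lam : R) (p q A0 A1 A2 : F3)
  (O : R -> R -> R -> Prop)
  (hT : 0 < T) (hR : 0 < Rad) (heps : 0 < eps) (hlam : 0 < lam)
  (hO : open3 O)
  (hdom : forall s x y, 0 <= s <= T -> x ^ 2 + y ^ 2 <= Rad ^ 2 -> O s x y)
  (hp : smooth_on O p) (hq : smooth_on O q)
  (hA0 : smooth_on O A0) (hA1 : smooth_on O A1) (hA2 : smooth_on O A2) :
  forall r t, 0 < r < Rad -> 0 < t < T ->
    Rabs (disk_int (omega p q A1 A2 t) r - disk_int (omega p q A1 A2 0) r)
    <= Rmax 1 (/ lam) * cyl_int (e3d eps lam p q A0 A1 A2) t r.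
Proof.
  intros r t Hr Ht.
  set (C := Rmax 1 (/ lam)).
  assert (HC : 1 <= C) by apply Rmax_l.
  assert (HCl : 1 <= C * lam).
  { pose proof (Rmax_r 1 (/ lam)). fold C in H.
    apply Rmult_le_compat_r with (r := lam) in H; [| lra]. rewrite Rinv_l in H; lra. }
  assert (Hr0 : 0 <= r) by lra.
  assert (HCirc : forall s th, 0 <= s <= T -> O s (r * cos th) (r * sin th)).
  { intros s th Hs. apply hdom; auto. rewrite circle_pt. pose proof (rsq_lt r Rad Hr). lra. }
  assert (HD : forall s, 0 <= s <= T -> forall x y, x ^ 2 + y ^ 2 < Rad ^ 2 -> O s x y).
  { intros s Hs x y Hxy. apply hdom; auto. lra. }
  set (Kv := fun s => RInt (bb p q A0 A1 A2 r s) 0 (2 * PI)).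
  set (Kd := fun s => RInt (Db p q A0 A1 A2 r s) 0 (2 * PI)).
  set (B := fun s => RInt (fun th => e3d eps lam p q A0 A1 A2 s (r * cos th) (r * sin th) * r) 0 (2 * PI)).
  assert (H2P : 0 <= 2 * PI) by (pose proof PI_RGT_0; lra).
  assert (Ed : forall s, 0 <= s <= T -> disk_int (omega p q A1 A2 s) r = / 2 * Kv s).
  { intros s Hs. rewrite (disk_omega O p q A0 A1 A2 hp hq hA0 hA1 hA2 Rad r s (HD s Hs) Hr). reflexivity. }
  rewrite (Ed t) by lra. rewrite (Ed 0) by lra.
  assert (Kcw : forall c, 0 <= c <= t -> forall e, 0 < e -> exists d, 0 < d /\
      forall u, 0 <= u <= t -> Rabs (u - c) < d -> Rabs (Kv u - Kv c) < e).
  { intros c Hc. apply (pcw (bb p q A0 A1 A2 r) 0 (2 * PI) c (fun u => 0 <= u <= t)); auto.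
    - intros th _. apply (c2_bb O p q A0 A1 A2 hp hq hA0 hA1 hA2); auto. apply HCirc. lra.
    - intros u Hu. apply ex_RInt_contR. intros z _. apply (cont_bb O p q A0 A1 A2 hp hq hA0 hA1 hA2). apply HCirc. lra. }
  assert (Bcw : forall c, 0 <= c <= t -> forall e, 0 < e -> exists d, 0 < d /\
      forall u, 0 <= u <= t -> Rabs (u - c) < d -> Rabs (B u - B c) < e).
  { intros c Hc. apply (pcw (fun u th => e3d eps lam p q A0 A1 A2 u (r * cos th) (r * sin th) * r) 0 (2 * PI) c (fun u => 0 <= u <= t)); auto.
    - intros th _. apply (c2_e3dr O p q A0 A1 A2 hp hq hA0 hA1 hA2); auto. apply HCirc. lra.
    - intros u Hu. apply ex_RInt_contR. intros z _. apply (cont_e3dr O p q A0 A1 A2 hp hq hA0 hA1 hA2). apply HCirc. lra. }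
  set (Kc := fun x => Kv (clamp 0 t x)). set (Bc := fun x => B (clamp 0 t x)).
  assert (CK : forall x, continuous Kc x) by (apply clamp_cont; [lra| exact Kcw]).
  assert (CB : forall x, continuous Bc x) by (apply clamp_cont; [lra| exact Bcw]).
  assert (EB : forall a b, ex_RInt Bc a b) by (intros; apply ex_RInt_contR; intros; apply CB).
  set (Pc := fun x => RInt Bc 0 x).
  assert (DP : forall x, is_derive Pc x (Bc x)).
  { intros x. apply (is_derive_RInt (V := R_CompleteNormedModule) Bc Pc 0 x); [| apply CB].
    apply locally_R. exists (mkposreal 1 Rlt_0_1). intros y _. apply (RInt_correct (V := R_CompleteNormedModule)). apply EB. }
  assert (DK : forall x, 0 < x < t -> is_derive Kc x (Kd x)).
  { intros x Hx. apply (is_derive_ext_loc Kv Kc).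
    - eapply filter_imp; [| apply (clamp_loc 0 t x Hx)]. intros y Hy. unfold Kc. now rewrite Hy.
    - apply (Kderiv O p q A0 A1 A2 hp hq hA0 hA1 hA2 T r Hr0 HCirc). lra. }
  assert (KB : forall c, 0 <= c <= t -> Rabs (Kd c) <= 2 * C * B c).
  { intros c Hc. apply (Kbound O p q A0 A1 A2 hO hp hq hA0 hA1 hA2); auto. intros th. apply HCirc. lra. }
  assert (Kc0 : Kc 0 = Kv 0) by (unfold Kc; rewrite clamp_id; lra).
  assert (Kct : Kc t = Kv t) by (unfold Kc; rewrite clamp_id; lra).
  assert (Pc0 : Pc 0 = 0) by (unfold Pc; rewrite RInt_point; reflexivity).
  assert (Cyl : cyl_int (e3d eps lam p q A0 A1 A2) t r = Pc t).
  { unfold cyl_int, Pc.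
    assert (Ein : forall s, 0 <= s <= t ->
       Rint (fun th => e3d eps lam p q A0 A1 A2 s (r * cos th) (r * sin th) * r) 0 (2 * PI) = Bc s).
    { intros s Hs. unfold Bc. rewrite clamp_id by lra. unfold B. apply Rint_RInt.
      apply ex_RInt_contR. intros z _. apply (cont_e3dr O p q A0 A1 A2 hp hq hA0 hA1 hA2). apply HCirc. lra. }
    rewrite Rint_RInt.
    - apply RInt_ext. intros s Hs. rewrite Rmin_left, Rmax_right in Hs by lra. apply Ein. lra.
    - apply (ex_RInt_ext Bc); [| apply EB]. intros s Hs. rewrite Rmin_left, Rmax_right in Hs by lra.
      symmetry. apply Ein. lra. }
  rewrite Cyl.
  assert (M1 : / 2 * (Kv t - Kv 0) <= C * Pc t).
  { destruct (MVT_gen (fun x => C * Pc x - / 2 * Kc x) 0 t (fun x => C * Bc x - / 2 * Kd (clamp 0 t x))) as [c [Hc Eq]].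
    - intros x Hx. rewrite Rmin_left, Rmax_right in Hx by lra. rewrite clamp_id by lra.
      apply is_derive_Reals. apply derivable_pt_lim_minus.
      + apply derivable_pt_lim_scal. apply is_derive_Reals, DP.
      + apply derivable_pt_lim_scal. apply is_derive_Reals, DK; lra.
    - intros x _. apply continuity_pt_filterlim. apply (cont_minusR (fun x => C * Pc x) (fun x => / 2 * Kc x)).
      + apply (cont_multR (fun _ => C) Pc); [apply cont_const|].
        apply (ex_derive_continuous (K:=R_AbsRing) (V:=R_NormedModule)). eexists. apply DP.
      + apply (cont_multR (fun _ => / 2) Kc); [apply cont_const| apply CK].
    - rewrite Rmin_left, Rmax_right in Hc by lra. simpl in Eq.
      assert (0 <= C * Bc c - / 2 * Kd (clamp 0 t c)).
      { unfold Bc. pose proof (KB (clamp 0 t c) (clamp_in 0 t c ltac:(lra))).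
        apply Rabs_le_between' in H || idtac. pose proof (Rle_abs (Kd (clamp 0 t c))). lra. }
      rewrite Kc0, Kct, Pc0 in Eq. nra. }
  assert (M2 : - (/ 2 * (Kv t - Kv 0)) <= C * Pc t).
  { destruct (MVT_gen (fun x => C * Pc x + / 2 * Kc x) 0 t (fun x => C * Bc x + / 2 * Kd (clamp 0 t x))) as [c [Hc Eq]].
    - intros x Hx. rewrite Rmin_left, Rmax_right in Hx by lra. rewrite clamp_id by lra.
      apply is_derive_Reals. apply derivable_pt_lim_plus.
      + apply derivable_pt_lim_scal. apply is_derive_Reals, DP.
      + apply derivable_pt_lim_scal. apply is_derive_Reals, DK; lra.
    - intros x _. apply continuity_pt_filterlim. apply (cont_plusR (fun x => C * Pc x) (fun x => / 2 * Kc x)).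
      + apply (cont_multR (fun _ => C) Pc); [apply cont_const|].
        apply (ex_derive_continuous (K:=R_AbsRing) (V:=R_NormedModule)). eexists. apply DP.
      + apply (cont_multR (fun _ => / 2) Kc); [apply cont_const| apply CK].
    - rewrite Rmin_left, Rmax_right in Hc by lra. simpl in Eq.
      assert (0 <= C * Bc c + / 2 * Kd (clamp 0 t c)).
      { unfold Bc. pose proof (KB (clamp 0 t c) (clamp_in 0 t c ltac:(lra))).
        pose proof (Rabs_maj2 (Kd (clamp 0 t c))). lra. }
      rewrite Kc0, Kct, Pc0 in Eq. nra. }
  apply Rabs_le. lra.
Qed.
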